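(* Let $\kappa$ be an infinite cardinal. (1) $\mathbf{T}_{<\kappa}\supseteq\mathbf{T}^{\mathbf{c}}_{<\kappa}\supseteq\mathbf{T}^{\mathbf{ab}}_{<\kappa}\supseteq\mathbf{T}^{\mathbf{ec}}_{<\kappa}$. (2) Every $T\in\mathbf{T}_{<\kappa}$ can be extended to a member of $\mathbf{T}^{\mathbf{c}}_{<\kappa}$ with the same vocabulary. (3) Suppose $\mu$ is a cardinal, $\tau_i\cap\tau_j=\tau$ for all $i<j<\mu$, $T_i\in\mathbf{T}_{<\kappa}$ with $\tau(T_i)=\tau_i$, $T\in\mathbf{T}^{\mathbf{ab}}_{<\kappa}$ with $\tau(T)=\tau$, and $T\subseteq T_i$ for all $i<\mu$. Then $\bigcup_{i<\mu}T_i$ is consistent. (4) If $\kappa>\aleph_0$ and $T\in\mathbf{T}_{<\kappa}$, then $T$ can be extended to a member of $\mathbf{T}^{\mathbf{ec}}_{<\kappa}$. (5) For $l\in\{\mathbf{c},\mathbf{ab},\mathbf{ec}\}$: if $f$ is an isomorphism of vocabularies from $\tau_1$ onto $\tau_2$ and $T\in\mathbf{T}^l_{<\kappa}$ has vocabulary $\tau_1$, then $f(T)\in\mathbf{T}^l_{<\kappa}$.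
   Context: All vocabularies are relational. $\mathcal{L}$ is first-order logic extended by the quantifier $Q^{\mathrm{cf}}_{\aleph_0}$: $M\models Q^{\mathrm{cf}}_{\aleph_0}xy\,\varphi(x,y,\bar a)$ iff $\{(b,c):M\models\varphi(b,c,\bar a)\}$ is a linear order of $\{c:M\models\exists x\varphi(x,c,\bar a)\}$ of cofinality $\aleph_0$; this logic is compact. $\mathcal{L}(\tau)$ is the set of $\mathcal{L}$-sentences of vocabulary $\tau$. A theory $T$ is a set of $\mathcal{L}$-sentences with a specified vocabulary $\tau(T)$; consistent means finitely satisfiable. An embedding of vocabularies is an injective arity-preserving map, an isomorphism if surjective; it induces a renaming $f$ of sentences (replace each symbol $R$ by $f(R)$), and $f(T)=\{f(\sigma):\sigma\in T\}$ with vocabulary $f(\tau(T))$. $\bar R\approx\bar S$ for tuples of distinct predicates means same length and $R_i\mapsto S_i$ injective and arity-preserving. $\psi(\bar R,\bar S)$ denotes a sentence all of whose predicates lie among the distinct tuples $\bar R,\bar S$. $\mathbf{T}_{<\kappa}$: consistent theories $T$ with $|\tau(T)|<\kappa$. $\mathbf{T}^{\mathbf{c}}_{<\kappa}$: those $T\in\mathbf{T}_{<\kappa}$ complete in $\mathcal{L}(\tau(T))$. $\mathbf{T}^{\mathbf{ab}}_{<\kappa}$: those $T_0\in\mathbf{T}^{\mathbf{c}}_{<\kappa}$ such that whenever $\tau(T_0)=\tau_1\cap\tau_2$ and $T_1,T_2\in\mathbf{T}_{<\kappa}$ with $\tau(T_l)=\tau_l$ and $T_0=T_1\cap T_2$,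 $T_1\cup T_2$ is consistent. $\mathbf{T}^{\mathbf{ec}}_{<\kappa}$: those $T\in\mathbf{T}^{\mathbf{c}}_{<\kappa}$ such that for every $\psi(\bar R,\bar S)$ with $\bar R\subseteq\tau(T)$ and $\bar S$ disjoint from $\tau(T)$, if $T\cup\{\psi(\bar R,\bar S)\}$ is consistent then $\psi(\bar R,\bar S')\in T$ for some $\bar S'\subseteq\tau(T)$ with $\bar S\approx\bar S'$. *)

(* Defs.v *)
From Stdlib Require Import List.
Import ListNotations.
Set Implicit Arguments.

Definition injective {A B : Type} (f : A -> B) : Prop :=
  forall x y, f x = f y -> x = y.

Section Logic.
Variable Sym : Type.

Inductive form : Type :=
| FAtom (R : Sym) (xs : list nat)
| FEq (x y : nat)
| FNeg (phi : form)
| FAnd (phi psi : form)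
| FEx (x : nat) (phi : form)
| FQcf (x y : nat) (phi : form).

Fixpoint fv (phi : form) (v : nat) : Prop :=
  match phi with
  | FAtom _ xs => In v xs
  | FEq x y => v = x \/ v = y
  | FNeg p => fv p v
  | FAnd p q => fv p v \/ fv q v
  | FEx x p => v <> x /\ fv p v
  | FQcf x y p => v <> x /\ v <> y /\ fv p v
  end.

Fixpoint occurs (phi : form) (s : Sym) : Prop :=
  match phi with
  | FAtom R _ => R = s
  | FEq _ _ => False
  | FNeg p => occurs p s
  | FAnd p q => occurs p s \/ occurs q s
  | FEx _ p => occurs p s
  | FQcf _ _ p => occurs p s
  end.

Fixpoint rename (f : Sym -> Sym) (phi : form) : form :=
  match phi with
  | FAtom R xs => FAtom (f R) xs
  | FEq x y => FEq x y
  | FNeg p => FNeg (rename f p)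
  | FAnd p q => FAnd (rename f p) (rename f q)
  | FEx x p => FEx x (rename f p)
  | FQcf x y p => FQcf x y (rename f p)
  end.

Variable ar : Sym -> nat.

Fixpoint wf (phi : form) : Prop :=
  match phi with
  | FAtom R xs => length xs = ar R
  | FEq _ _ => True
  | FNeg p => wf p
  | FAnd p q => wf p /\ wf q
  | FEx _ p => wf p
  | FQcf _ _ p => wf p
  end.

Definition sentence_of (tau : Sym -> Prop) (phi : form) : Prop :=
  wf phi /\ (forall v, ~ fv phi v) /\ (forall s, occurs phi s -> tau s).

Definition upd {M : Type} (rho : nat -> M) (x : nat) (a : M) : nat -> M :=
  fun v => if Nat.eqb v x then a else rho v.

Definition linear_order_of {M : Type} (D : M -> Prop) (Rl : M -> M -> Prop) : Prop :=
  (forall b c, Rl b c -> D b /\ D c) /\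
  (forall b, D b -> Rl b b) /\
  (forall b c, Rl b c -> Rl c b -> b = c) /\
  (forall b c d, Rl b c -> Rl c d -> Rl b d) /\
  (forall b c, D b -> D c -> Rl b c \/ Rl c b).

Definition cof_aleph0 {M : Type} (D : M -> Prop) (Rl : M -> M -> Prop) : Prop :=
  (exists s : nat -> M, (forall n, D (s n)) /\
     (forall d, D d -> exists n, Rl d (s n))) /\
  ~ (exists l : list M, (forall a, In a l -> D a) /\
       (forall d, D d -> exists a, In a l /\ Rl d a)).

(* a structure: carrier M with interpretation I of every symbol *)
Fixpoint sat {M : Type} (I : Sym -> list M -> Prop) (rho : nat -> M)
  (phi : form) : Prop :=
  match phi with
  | FAtom R xs => I R (map rho xs)
  | FEq x y => rho x = rho y
  | FNeg p => ~ sat I rho p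
  | FAnd p q => sat I rho p /\ sat I rho q
  | FEx x p => exists a : M, sat I (upd rho x a) p
  | FQcf x y p =>
      let Rl := fun b c => sat I (upd (upd rho x b) y c) p in
      let D := fun c => exists b, Rl b c in
      linear_order_of D Rl /\ cof_aleph0 D Rl
  end.

(* consistent = finitely satisfiable (in a nonempty structure) *)
Definition consistent (Sigma : form -> Prop) : Prop :=
  forall l : list form, (forall phi, In phi l -> Sigma phi) ->
  exists (M : Type) (m0 : M) (I : Sym -> list M -> Prop),
    forall phi, In phi l -> forall rho : nat -> M, sat I rho phi.

Record theory : Type := Theory { voc : Sym -> Prop ; sens : form -> Prop }.

Definition is_theory (T : theory) : Prop :=
  forall phi, sens T phi -> sentence_of (voc T) phi.

Variable K : Type.  (* a type whose cardinality is kappa *)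

Definition card_lt (tau : Sym -> Prop) : Prop :=
  (exists f : {s | tau s} -> K, injective f) /\
  ~ (exists g : K -> {s | tau s}, injective g).

Definition T_lt (T : theory) : Prop :=
  is_theory T /\ consistent (sens T) /\ card_lt (voc T).

Definition complete (T : theory) : Prop :=
  forall phi, sentence_of (voc T) phi -> sens T phi \/ sens T (FNeg phi).

Definition T_c (T : theory) : Prop := T_lt T /\ complete T.

Definition T_ab (T0 : theory) : Prop :=
  T_c T0 /\
  forall T1 T2 : theory,
    (forall s, voc T0 s <-> voc T1 s /\ voc T2 s) ->
    T_lt T1 -> T_lt T2 ->
    (forall phi, sens T0 phi <-> sens T1 phi /\ sens T2 phi) ->
    consistent (fun phi => sens T1 phi \/ sens T2 phi).

(* psi(R,S) with R in tau(T) and S a tuple of distinct predicates disjoint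
   from tau(T); psi(R,S') obtained by the renaming S_i |-> S'_i. *)
Definition T_ec (T : theory) : Prop :=
  T_c T /\
  forall (S : list Sym) (psi : form),
    NoDup S -> (forall s, In s S -> ~ voc T s) ->
    sentence_of (fun s => voc T s \/ In s S) psi ->
    consistent (fun phi => sens T phi \/ phi = psi) ->
    exists S' : list Sym,
      length S' = length S /\ NoDup S' /\
      (forall i d, i < length S -> ar (nth i S' d) = ar (nth i S d)) /\
      (forall s, In s S' -> voc T s) /\
      exists g : Sym -> Sym,
        (forall i d, i < length S -> g (nth i S d) = nth i S' d) /\
        (forall s, ~ In s S -> g s = s) /\
        sens T (rename g psi).

Inductive cls : Type := Cc | Cab | Cec.

Definition T_cls (l : cls) (T : theory) : Prop :=
  match l with Cc => T_c T | Cab => T_ab T | Cec => T_ec T end.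

Definition rename_theory (f : Sym -> Sym) (tau2 : Sym -> Prop) (T : theory) : theory :=
  Theory tau2 (fun psi => exists phi, sens T phi /\ psi = rename f phi).

End Logic.

(* Main.v *)
Require Import Defs.
From Stdlib Require Import List Arith Lia Classical ClassicalEpsilon FunctionalExtensionality PropExtensionality ProofIrrelevance Cantor.
Import ListNotations.

From mathcomp Require ssreflect classical_sets boolp.
Module ZW.
Import ssreflect classical_sets boolp.
Local Open Scope classical_set_scope.
Lemma zorn_sets (T : Type) (P : (T -> Prop) -> Prop) :
  (forall F : (T -> Prop) -> Prop, (forall X, F X -> P X) ->
     (forall X Y, F X -> F Y -> (forall t, X t -> Y t) \/ (forall t, Y t -> X t)) ->
     P (fun t => exists X, F X /\ X t)) ->
  exists A, P A /\ forall B, P B -> (forall t, A t -> B t) -> forall t, B t -> A t.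
Proof.
move=> H.
have HP : forall F : set (set T), F `<=` P -> total_on F subset -> P (\bigcup_(X in F) X).
  move=> F FP Ftot.
  have -> : (\bigcup_(X in F) X) = (fun t => exists X, F X /\ X t).
    apply: funext => t; apply: propext; split.
    - by case=> X FX Xt; exists X.
    - by case=> X [FX Xt]; exists X.
  apply: H; first exact: FP.
  move=> X Y FX FY; case: (Ftot X Y FX FY) => XY; [left|right] => t; exact: XY.
have [A [PA Amax]] := @Zorn_bigcup T P HP.
exists A; split => // B PB AB t Bt.
case: (pselect (A t)) => // nAt.
exfalso; apply: (Amax B _ PB).
split; first by move=> x; apply: AB.
move=> BA. apply: nAt. exact: BA.
Qed.
End ZW.
Check ZW.zorn_sets.

From Stdlib Require Import List Arith Lia Classical ClassicalEpsilon FunctionalExtensionality PropExtensionality ProofIrrelevance Cantor.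
Import ListNotations.
Set Bullet Behavior "Strict Subproofs".

Definition inj_on {A B : Type} (X : A -> Prop) (f : A -> B) :=
  forall x y, X x -> X y -> f x = f y -> x = y.
Definition emb {A B : Type} (X : A -> Prop) (Y : B -> Prop) :=
  exists f : A -> B, (forall x, X x -> Y (f x)) /\ inj_on X f.

Definition choose_or {A B : Type} (b0 : B) (R : A -> B -> Prop) (a : A) : B :=
  match excluded_middle_informative (exists b, R a b) with
  | left H => proj1_sig (constructive_indefinite_description _ H)
  | right _ => b0
  end.

Lemma choose_or_spec {A B : Type} (b0 : B) (R : A -> B -> Prop) a :
  (exists b, R a b) -> R a (choose_or b0 R a).
Proof.
  intros H. unfold choose_or. destruct excluded_middle_informative as [H'|H'].
  - exact (proj2_sig (constructive_indefinite_description _ H')).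
  - contradiction.
Qed.

Lemma comparability {A B : Type} (a0 : A) (b0 : B) (X : A -> Prop) (Y : B -> Prop) :
  emb X Y \/ emb Y X.
Proof.
  set (P := fun G : A * B -> Prop =>
    (forall p, G p -> X (fst p) /\ Y (snd p)) /\
    (forall a b b', G (a, b) -> G (a, b') -> b = b') /\
    (forall a a' b, G (a, b) -> G (a', b) -> a = a')).
  destruct (ZW.zorn_sets _ P) as [G [[G1 [G2 G3]] Gmax]].
  - intros F FP Ftot. split; [|split].
    + intros p [Z [FZ Zp]]. exact (proj1 (FP Z FZ) p Zp).
    + intros a b b' [Z1 [F1 Z1p]] [Z2 [F2 Z2p]].
      destruct (Ftot Z1 Z2 F1 F2) as [H|H].
      * exact (proj1 (proj2 (FP Z2 F2)) a b b' (H _ Z1p) Z2p).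
      * exact (proj1 (proj2 (FP Z1 F1)) a b b' Z1p (H _ Z2p)).
    + intros a a' b [Z1 [F1 Z1p]] [Z2 [F2 Z2p]].
      destruct (Ftot Z1 Z2 F1 F2) as [H|H].
      * exact (proj2 (proj2 (FP Z2 F2)) a a' b (H _ Z1p) Z2p).
      * exact (proj2 (proj2 (FP Z1 F1)) a a' b Z1p (H _ Z2p)).
  - destruct (classic (forall a, X a -> exists b, G (a, b))) as [HX|HX].
    + left. exists (choose_or b0 (fun a b => G (a, b))). split.
      * intros x Xx. exact (proj2 (G1 _ (choose_or_spec b0 (fun a b => G (a, b)) x (HX x Xx)))).
      * intros x y Xx Xy E.
        apply (G3 x y (choose_or b0 (fun a b => G (a, b)) x)).
        -- exact (choose_or_spec b0 (fun a b => G (a, b)) x (HX x Xx)).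
        -- rewrite E. exact (choose_or_spec b0 (fun a b => G (a, b)) y (HX y Xy)).
    + destruct (classic (forall b, Y b -> exists a, G (a, b))) as [HY|HY].
      * right. exists (choose_or a0 (fun b a => G (a, b))). split.
        -- intros x Xx. exact (proj1 (G1 _ (choose_or_spec a0 (fun b a => G (a, b)) x (HY x Xx)))).
        -- intros x y Xx Xy E.
           apply (G2 (choose_or a0 (fun b a => G (a, b)) x) x y).
           ++ exact (choose_or_spec a0 (fun b a => G (a, b)) x (HY x Xx)).
           ++ rewrite E. exact (choose_or_spec a0 (fun b a => G (a, b)) y (HY y Xy)).
      * exfalso.
        apply not_all_ex_not in HX. destruct HX as [a Ha].
        apply imply_to_and in Ha. destruct Ha as [Xa Ha].
        apply not_all_ex_not in HY. destruct HY as [b Hb].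
        apply imply_to_and in Hb. destruct Hb as [Yb Hb].
        set (G' := fun p => G p \/ p = (a, b)).
        assert (PG' : P G').
        { split; [|split].
          - intros p [Gp|E]; [exact (G1 p Gp)|subst p; simpl; auto].
          - intros a1 b1 b2 [H1|H1] [H2|H2].
            + exact (G2 _ _ _ H1 H2).
            + injection H2; intros; subst. exfalso; apply Ha; eauto.
            + injection H1; intros; subst. exfalso; apply Ha; eauto.
            + injection H1; injection H2; intros; subst; auto.
          - intros a1 a2 b1 [H1|H1] [H2|H2].
            + exact (G3 _ _ _ H1 H2).
            + injection H2; intros; subst. exfalso; apply Hb; eauto.
            + injection H1; intros; subst. exfalso; apply Hb; eauto.
            + injection H1; injection H2; intros; subst; auto. }
        assert (Gab : G (a, b)).
        { apply (Gmax G' PG'); [intros t Gt; left; exact Gt | right; reflexivity]. }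
        apply Ha. exists b. exact Gab.
Qed.

From Stdlib Require Import List Arith Lia Classical ClassicalEpsilon FunctionalExtensionality PropExtensionality ProofIrrelevance Cantor.
Import ListNotations.
Set Bullet Behavior "Strict Subproofs".

Lemma pn_ex : {f : nat * nat -> nat | forall p q, f p = f q -> p = q}.
Proof.
  exists to_nat. intros p q E. rewrite <- (cancel_of_to p), <- (cancel_of_to q), E. reflexivity.
Qed.
Definition pn := proj1_sig pn_ex.
Lemma pn_inj p q : pn p = pn q -> p = q.
Proof. exact (proj2_sig pn_ex p q). Qed.

Section Hess.
Variable A : Type.
Variable h : nat -> A.
Hypothesis hinj : forall m n, h m = h n -> m = n.

Definition dom (G : (A * A) * A -> Prop) x := exists y z, G ((x, y), z).

Definition PG (G : (A * A) * A -> Prop) :=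
  (forall x y z z', G ((x, y), z) -> G ((x, y), z') -> z = z') /\
  (forall x y x' y' z, G ((x, y), z) -> G ((x', y'), z) -> x = x' /\ y = y') /\
  (forall x y z, G ((x, y), z) -> dom G y /\ dom G z) /\
  (forall x y, dom G x -> dom G y -> exists z, G ((x, y), z)) /\
  ((forall t, ~ G t) \/ (forall m n, G ((h m, h n), h (pn (m, n))))).

Definition B0 t := exists m n, t = ((h m, h n), h (pn (m, n))).


Lemma PB0 : PG B0.
Proof.
  assert (D : forall x, dom B0 x -> exists m, x = h m).
  { intros x [y [z [m [n E]]]]. injection E; intros; subst. eauto. }
  assert (D' : forall m, dom B0 (h m)).
  { intro m. exists (h 0), (h (pn (m, 0))). exists m, 0. reflexivity. }
  split; [|split; [|split; [|split]]].
  - intros x y z z' [m [n E]] [m' [n' E']].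
    injection E as E1 E2 E3. injection E' as E1' E2' E3'. subst.
    apply hinj in E1'. apply hinj in E2'. subst. reflexivity.
  - intros x y x' y' z [m [n E]] [m' [n' E']].
    injection E as E1 E2 E3. injection E' as E1' E2' E3'. subst.
    apply hinj in E3'. apply pn_inj in E3'. injection E3' as -> ->. auto.
  - intros x y z [m [n E]]. injection E; intros; subst. auto.
  - intros x y Dx Dy. destruct (D x Dx) as [m ->]. destruct (D y Dy) as [n ->].
    exists (h (pn (m, n))). exists m, n. reflexivity.
  - right. intros m n. exists m, n. reflexivity.
Qed.

Lemma PG_chain (F : ((A * A) * A -> Prop) -> Prop) :
  (forall X, F X -> PG X) ->
  (forall X Y, F X -> F Y -> (forall t, X t -> Y t) \/ (forall t, Y t -> X t)) ->
  PG (fun t => exists X, F X /\ X t).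
Proof.
  intros FP Ftot.
  set (U := fun t => exists X, F X /\ X t).
  assert (domU : forall x, dom U x -> exists X, F X /\ dom X x).
  { intros x [y [z [X [FX Xt]]]]. exists X. split; auto. exists y, z. auto. }
  assert (domX : forall X x, F X -> dom X x -> dom U x).
  { intros X x FX [y [z Xt]]. exists y, z, X. auto. }
  assert (two : forall X Y t t', F X -> F Y -> X t -> Y t' -> exists Z, F Z /\ Z t /\ Z t').
  { intros X Y t t' FX FY Xt Yt'. destruct (Ftot X Y FX FY) as [H|H].
    - exists Y. auto.
    - exists X. auto. }
  split; [|split; [|split; [|split]]].
  - intros x y z z' [X [FX Xt]] [Y [FY Yt]].
    destruct (two X Y _ _ FX FY Xt Yt) as [Z [FZ [Z1 Z2]]].
    exact (proj1 (FP Z FZ) _ _ _ _ Z1 Z2).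
  - intros x y x' y' z [X [FX Xt]] [Y [FY Yt]].
    destruct (two X Y _ _ FX FY Xt Yt) as [Z [FZ [Z1 Z2]]].
    exact (proj1 (proj2 (FP Z FZ)) _ _ _ _ _ Z1 Z2).
  - intros x y z [X [FX Xt]].
    destruct (proj1 (proj2 (proj2 (FP X FX))) _ _ _ Xt) as [Dy Dz].
    split; eapply domX; eauto.
  - intros x y Dx Dy.
    destruct (domU x Dx) as [X [FX DX]]. destruct (domU y Dy) as [Y [FY DY]].
    destruct DX as [y1 [z1 X1]]. destruct DY as [y2 [z2 Y2]].
    destruct (two X Y _ _ FX FY X1 Y2) as [Z [FZ [Z1 Z2]]].
    destruct (proj1 (proj2 (proj2 (proj2 (FP Z FZ)))) x y) as [z Zz].
    + exists y1, z1; auto.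
    + exists y2, z2; auto.
    + exists z, Z. auto.
  - destruct (classic (exists X t, F X /\ X t)) as [[X [t [FX Xt]]]|N].
    + right. intros m n. exists X. split; auto.
      destruct (proj2 (proj2 (proj2 (proj2 (FP X FX))))) as [E|E].
      * exfalso; exact (E t Xt).
      * apply E.
    + left. intros t [X [FX Xt]]. apply N. eauto.
Qed.

Theorem hessenberg : exists p : A * A -> A, injective p.
Proof.
  destruct (ZW.zorn_sets _ PG PG_chain) as [G [PGG Gmax]].
  destruct PGG as [Gf [Gi [Gc [Gt Gb]]]].
  assert (Gbase : forall m n, G ((h m, h n), h (pn (m, n)))).
  { destruct Gb as [E|E]; auto.
    exfalso. assert (B0 ((h 0, h 0), h (pn (0, 0)))) as Hb by (exists 0, 0; reflexivity).
    pose proof (Gmax B0 PB0 (fun t Gt => False_ind _ (E t Gt)) _ Hb) as Hg.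
    exact (E _ Hg). }
  set (X := dom G).
  assert (Xh : forall m, X (h m)).
  { intro m. exists (h 0), (h (pn (m, 0))). apply Gbase. }
  set (g := choose_or (h 0) (fun (p : A * A) z => G (p, z))).
  assert (gspec : forall x y, X x -> X y -> G ((x, y), g (x, y))).
  { intros x y Xx Xy. apply (choose_or_spec (h 0) (fun (p : A * A) z => G (p, z)) (x, y)).
    apply Gt; auto. }
  assert (gX : forall x y, X x -> X y -> X (g (x, y))).
  { intros x y Xx Xy. exact (proj2 (Gc _ _ _ (gspec x y Xx Xy))). }
  assert (ginj : forall x y x' y', X x -> X y -> X x' -> X y' -> g (x, y) = g (x', y') -> x = x' /\ y = y').
  { intros x y x' y' Xx Xy Xx' Xy' E.
    apply (Gi x y x' y' (g (x, y))). apply gspec; auto. rewrite E. apply gspec; auto. }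
  destruct (comparability (h 0) (h 0) X (fun a => ~ X a)) as [[i [iX iinj]]|[j [jX jinj]]].
  - (* extend: contradiction *)
    exfalso.
    set (c1 := h 0). set (c2 := h 1). set (c3 := h 2).
    assert (c12 : c1 <> c2) by (intro E; apply hinj in E; discriminate).
    assert (c13 : c1 <> c3) by (intro E; apply hinj in E; discriminate).
    assert (c23 : c2 <> c3) by (intro E; apply hinj in E; discriminate).
    assert (Xc1 : X c1) by apply Xh. assert (Xc2 : X c2) by apply Xh. assert (Xc3 : X c3) by apply Xh.
    assert (GX : forall x y z, G ((x, y), z) -> X x /\ X y /\ X z).
    { intros x y z Gxyz. destruct (Gc _ _ _ Gxyz). split; auto. exists y, z; auto. }
    assert (gginj : forall x y x' y' c c', X x -> X y -> X x' -> X y' -> X c -> X c' ->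
               g (g (x, y), c) = g (g (x', y'), c') -> x = x' /\ y = y' /\ c = c').
    { intros x y x' y' c c' Xx Xy Xx' Xy' Xc0 Xc' E.
      apply ginj in E; auto. destruct E as [E1 E2]. apply ginj in E1; auto.
      destruct E1; auto. }
    set (D := fun u => X u \/ exists x, X x /\ u = i x).
    set (iinv := choose_or (h 0) (fun u x => X x /\ u = i x)).
    assert (iinvP : forall u, D u -> ~ X u -> X (iinv u) /\ u = i (iinv u)).
    { intros u [Xu|Hu] nXu; [contradiction|].
      exact (choose_or_spec (h 0) (fun u x => X x /\ u = i x) u Hu). }
    set (F := fun u v =>
      if excluded_middle_informative (X u) then
        (if excluded_middle_informative (X v) then g (u, v) else i (g (g (u, iinv v), c1)))
      else
        (if excluded_middle_informative (X v) then i (g (g (iinv u, v), c2))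
         else i (g (g (iinv u, iinv v), c3)))).
    set (G' := fun t : (A * A) * A => D (fst (fst t)) /\ D (snd (fst t)) /\ snd t = F (fst (fst t)) (snd (fst t))).
    assert (FD : forall u v, D u -> D v -> D (F u v) /\ (X (F u v) <-> X u /\ X v)).
    { intros u v Du Dv. unfold F.
      destruct (excluded_middle_informative (X u)) as [Xu|nXu];
      destruct (excluded_middle_informative (X v)) as [Xv|nXv].
      - split; [left; apply gX; auto | split; [intros; split; auto | intros; apply gX; auto]].
      - destruct (iinvP v Dv nXv) as [Xv' Ev].
        split; [right; eexists; split; [|reflexivity]; apply gX; auto; apply gX; auto|].
        split; [intro HH; exfalso; refine (iX _ _ HH); apply gX; auto; apply gX; auto | tauto].
      - destruct (iinvP u Du nXu) as [Xu' Eu].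
        split; [right; eexists; split; [|reflexivity]; apply gX; auto; apply gX; auto|].
        split; [intro HH; exfalso; refine (iX _ _ HH); apply gX; auto; apply gX; auto | tauto].
      - destruct (iinvP u Du nXu) as [Xu' Eu]. destruct (iinvP v Dv nXv) as [Xv' Ev].
        split; [right; eexists; split; [|reflexivity]; apply gX; auto; apply gX; auto|].
        split; [intro HH; exfalso; refine (iX _ _ HH); apply gX; auto; apply gX; auto | tauto]. }
    assert (Finj : forall u v u' v', D u -> D v -> D u' -> D v' -> F u v = F u' v' -> u = u' /\ v = v').
    { intros u v u' v' Du Dv Du' Dv' E.
      pose proof (proj2 (FD u v Du Dv)) as H1. pose proof (proj2 (FD u' v' Du' Dv')) as H2.
      rewrite E in H1.
      assert (EX : X u /\ X v <-> X u' /\ X v') by tauto.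
      unfold F in E.
      destruct (excluded_middle_informative (X u)) as [Xu|nXu];
      destruct (excluded_middle_informative (X v)) as [Xv|nXv];
      destruct (excluded_middle_informative (X u')) as [Xu'|nXu'];
      destruct (excluded_middle_informative (X v')) as [Xv'|nXv'];
      try (exfalso; tauto);
      repeat match goal with
             | H : ~ X ?w, Dw : D ?w |- _ =>
                 let a := fresh in let b := fresh in
                 destruct (iinvP w Dw H) as [a b]; clear H
             end;
      try (apply iinj in E; [|apply gX; auto; apply gX; auto|apply gX; auto; apply gX; auto]);
      try (apply gginj in E; auto; destruct E as [E1 [E2 E3]]);
      try (exfalso; auto; fail);
      try (apply ginj in E; auto; fail);
      split; congruence. }
    assert (PG' : PG G').
    { split; [|split; [|split; [|split]]].
      - intros x y z z' [_ [_ E1]] [_ [_ E2]]. simpl in *. congruence.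
      - intros x y x' y' z [Dx [Dy E1]] [Dx' [Dy' E2]]. simpl in *.
        apply Finj; auto. congruence.
      - intros x y z [Dx [Dy E1]]. simpl in *.
        assert (DG' : forall w, D w -> dom G' w).
        { intros w Dw. exists w, (F w w). split; [exact Dw|split; [exact Dw|reflexivity]]. }
        split; apply DG'; auto. subst z. apply FD; auto.
      - intros x y [y1 [z1 [Dx _]]] [y2 [z2 [Dy _]]]. simpl in *.
        exists (F x y). split; [exact Dx|split; [exact Dy|reflexivity]].
      - right. intros m n. split; [left; apply Xh|split; [left; apply Xh|]]. simpl.
        unfold F. destruct (excluded_middle_informative (X (h m))) as [_|N]; [|exfalso; apply N, Xh].
        destruct (excluded_middle_informative (X (h n))) as [_|N]; [|exfalso; apply N, Xh].
        apply (Gf (h m) (h n)); [apply Gbase|apply gspec; apply Xh]. }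
    assert (GG' : forall t, G t -> G' t).
    { intros [[x y] z] Gt0. destruct (GX _ _ _ Gt0) as [Xx [Xy Xz]].
      split; [left; auto|split; [left; auto|]]. simpl.
      unfold F. destruct (excluded_middle_informative (X x)) as [_|N]; [|contradiction].
      destruct (excluded_middle_informative (X y)) as [_|N]; [|contradiction].
      apply (Gf x y); auto. }
    assert (Gnew : G' ((c1, i c1), F c1 (i c1))).
    { split; [left; auto|split; [right; exists c1; auto|reflexivity]]. }
    pose proof (Gmax G' PG' GG' _ Gnew) as Gn.
    destruct (Gc _ _ _ Gn) as [Dn _].
    exact (iX c1 Xc1 Dn).
  - (* A embeds in X x X *)
    set (e := fun a => if excluded_middle_informative (X a) then (a, h 0) else (j a, h 1)).
    exists (fun p => g (g (e (fst p)), g (e (snd p)))).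
    assert (eX : forall a, X (fst (e a)) /\ X (snd (e a))).
    { intro a. unfold e. destruct (excluded_middle_informative (X a)) as [Xa|nXa]; simpl; auto. }
    assert (einj : forall a b, e a = e b -> a = b).
    { intros a b E. unfold e in E.
      destruct (excluded_middle_informative (X a)) as [Xa|nXa];
      destruct (excluded_middle_informative (X b)) as [Xb|nXb];
      pose proof (f_equal fst E) as E1; pose proof (f_equal snd E) as E2; simpl in E1, E2; auto;
      try (apply hinj in E2; discriminate). }
    assert (gX' : forall a, X (g (e a))).
    { intro a. destruct (e a) as [x y] eqn:Ea. pose proof (eX a) as H. rewrite Ea in H. apply gX; tauto. }
    intros [a b] [a' b'] E. simpl in E.
    apply ginj in E; auto. destruct E as [E1 E2].
    assert (gi : forall a a', g (e a) = g (e a') -> a = a').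
    { intros a0 a0' E. apply einj.
      destruct (e a0) as [x y] eqn:Ea. destruct (e a0') as [x' y'] eqn:Ea'.
      pose proof (eX a0) as H. pose proof (eX a0') as H'. rewrite Ea in H. rewrite Ea' in H'.
      simpl in *. apply ginj in E; try tauto. destruct E; subst; auto. }
    rewrite (gi _ _ E1), (gi _ _ E2). reflexivity.
Qed.
End Hess.

From Stdlib Require Import List Arith Lia Classical ClassicalEpsilon FunctionalExtensionality PropExtensionality ProofIrrelevance.
Import ListNotations.
Set Bullet Behavior "Strict Subproofs".

Section Avoid.
Variable K : Type.
Variable h : nat -> K.
Hypothesis hinj : forall m n, h m = h n -> m = n.

Lemma avoid_point (k0 : K) : exists s : K -> K, injective s /\ forall k, s k <> k0.
Proof.
  assert (gen : forall h' : nat -> K, (forall m n, h' m = h' n -> m = n) -> (forall m, h' m <> k0) ->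
             exists s : K -> K, injective s /\ forall k, s k <> k0).
  { intros h' h'inj h'k0.
    set (hinv := choose_or 0 (fun k m => h' m = k)).
    set (s := fun k => if excluded_middle_informative (exists m, h' m = k) then h' (S (hinv k))
                       else if excluded_middle_informative (k = k0) then h' 0 else k).
    assert (hv : forall k, (exists m, h' m = k) -> h' (hinv k) = k).
    { intros k Hk. exact (choose_or_spec 0 (fun k m => h' m = k) k Hk). }
    exists s. split.
    - intros a b E. unfold s in E.
      destruct (excluded_middle_informative (exists m, h' m = a)) as [Ha|Ha];
      destruct (excluded_middle_informative (exists m, h' m = b)) as [Hb|Hb].
      + apply h'inj in E. injection E as E. rewrite <- (hv a Ha), <- (hv b Hb), E. reflexivity.
      + destruct (excluded_middle_informative (b = k0)) as [Eb|Eb].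
        * apply h'inj in E. discriminate.
        * exfalso. apply Hb. eauto.
      + destruct (excluded_middle_informative (a = k0)) as [Ea|Ea].
        * apply h'inj in E. discriminate.
        * exfalso. apply Ha. eauto.
      + destruct (excluded_middle_informative (a = k0)) as [Ea|Ea];
        destruct (excluded_middle_informative (b = k0)) as [Eb|Eb]; try congruence.
        * exfalso. apply Hb. eauto.
        * exfalso. apply Ha. eauto.
    - intros k. unfold s.
      destruct (excluded_middle_informative (exists m, h' m = k)); auto.
      destruct (excluded_middle_informative (k = k0)); auto. }
  destruct (classic (exists j, h j = k0)) as [[j Hj]|N].
  - apply (gen (fun m => h (S (m + j)))).
    + intros m n E. apply hinj in E. lia.
    + intros m E. rewrite <- Hj in E. apply hinj in E. lia.
  - apply (gen h hinj). intros m E. apply N. eauto.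
Qed.
End Avoid.

Section CardLt.
Variable Sym K : Type.
Variable h : nat -> K.
Hypothesis hinj : forall m n, h m = h n -> m = n.

Definition embK (P : Sym -> Prop) := exists f : Sym -> K, inj_on P f.
Definition noK (P : Sym -> Prop) := ~ exists g : K -> Sym, (forall k, P (g k)) /\ injective g.

Lemma card_lt_to (P : Sym -> Prop) : card_lt K P -> embK P /\ noK P.
Proof.
  intros [[f finj] N]. split.
  - exists (fun s => match excluded_middle_informative (P s) with
                     | left H => f (exist _ s H) | right _ => h 0 end).
    intros x y Px Py E.
    destruct (excluded_middle_informative (P x)) as [Hx|]; [|contradiction].
    destruct (excluded_middle_informative (P y)) as [Hy|]; [|contradiction].
    apply finj in E. injection E. auto.
  - intros [g [gP ginj]]. apply N.
    exists (fun k => exist _ (g k) (gP k)).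
    intros a b E. injection E. apply ginj.
Qed.

Lemma card_lt_of (P : Sym -> Prop) : embK P -> noK P -> card_lt K P.
Proof.
  intros [f finj] N. split.
  - exists (fun u => f (proj1_sig u)). intros [x Hx] [y Hy] E. simpl in E.
    pose proof (finj x y Hx Hy E). subst. f_equal. apply proof_irrelevance.
  - intros [g ginj]. apply N. exists (fun k => proj1_sig (g k)). split.
    + intro k. exact (proj2_sig (g k)).
    + intros a b E. apply ginj. destruct (g a), (g b). simpl in E. subst. f_equal. apply proof_irrelevance.
Qed.

Lemma card_lt_ext (P Q : Sym -> Prop) : (forall s, P s <-> Q s) -> card_lt K P -> card_lt K Q.
Proof.
  intros PQ HP. destruct (card_lt_to P HP) as [[f finj] N].
  apply card_lt_of.
  - exists f. intros x y Qx Qy. apply finj; apply PQ; auto.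
  - intros [g [gQ ginj]]. apply N. exists g. split; auto. intro k. apply PQ; auto.
Qed.

Lemma card_lt_sub (P Q : Sym -> Prop) : (forall s, Q s -> P s) -> card_lt K P -> card_lt K Q.
Proof.
  intros PQ HP. destruct (card_lt_to P HP) as [[f finj] N].
  apply card_lt_of.
  - exists f. intros x y Qx Qy. apply finj; apply PQ; auto.
  - intros [g [gQ ginj]]. apply N. exists g. split; auto.
Qed.

Lemma card_lt_add1 (P : Sym -> Prop) x : card_lt K P -> card_lt K (fun s => P s \/ s = x).
Proof.
  intros HP. destruct (card_lt_to P HP) as [[f finj] N].
  destruct (avoid_point K h hinj (h 0)) as [sg [sginj sgk]].
  apply card_lt_of.
  - exists (fun s => if excluded_middle_informative (s = x) then h 0 else sg (f s)).
    intros a b Ha Hb E.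
    destruct (excluded_middle_informative (a = x)) as [Ea|Ea];
    destruct (excluded_middle_informative (b = x)) as [Eb|Eb].
    + congruence.
    + exfalso. exact (sgk _ (eq_sym E)).
    + exfalso. exact (sgk _ E).
    + apply sginj in E. apply finj in E; auto.
      * destruct Ha; [auto|contradiction].
      * destruct Hb; [auto|contradiction].
  - intros [g [gP ginj]]. apply N.
    destruct (classic (exists k0, g k0 = x)) as [[k0 Hk0]|Nx].
    + destruct (avoid_point K h hinj k0) as [s2 [s2inj s2k]].
      exists (fun k => g (s2 k)). split.
      * intro k. destruct (gP (s2 k)) as [H|H]; auto.
        exfalso. apply (s2k k). apply ginj. congruence.
      * intros a b E. apply ginj in E. apply s2inj in E. auto.
    + exists g. split; auto. intro k. destruct (gP k) as [H|H]; auto.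
      exfalso. apply Nx. eauto.
Qed.

Lemma card_lt_app (P : Sym -> Prop) F : card_lt K P -> card_lt K (fun s => P s \/ In s F).
Proof.
  intros HP. induction F as [|x F IH].
  - apply (card_lt_ext P); auto. intros s; simpl; tauto.
  - apply (card_lt_ext (fun s => (P s \/ In s F) \/ s = x)).
    + intros s; simpl; intuition.
    + apply card_lt_add1. exact IH.
Qed.

End CardLt.

From Stdlib Require Import List Arith Lia Classical ClassicalEpsilon FunctionalExtensionality PropExtensionality ProofIrrelevance.
Import ListNotations.
Set Bullet Behavior "Strict Subproofs".

Section Logic1.
Variable Sym : Type.

Lemma qcf_eq {M : Type} (R1 R2 : M -> M -> Prop) : (forall b c, R1 b c = R2 b c) ->
  (linear_order_of (fun c => exists b, R1 b c) R1 /\ cof_aleph0 (fun c => exists b, R1 b c) R1) =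
  (linear_order_of (fun c => exists b, R2 b c) R2 /\ cof_aleph0 (fun c => exists b, R2 b c) R2).
Proof.
  intros E. assert (E' : R1 = R2) by (extensionality b; extensionality c; apply E).
  rewrite E'. reflexivity.
Qed.

Lemma sat_ext_I {M : Type} (I J : Sym -> list M -> Prop) (phi : form Sym) :
  (forall s, occurs phi s -> I s = J s) -> forall rho, sat I rho phi = sat J rho phi.
Proof.
  induction phi; intros HIJ rho; simpl in *.
  - rewrite HIJ; auto.
  - reflexivity.
  - rewrite IHphi; auto.
  - rewrite IHphi1, IHphi2; auto.
  - f_equal. extensionality a. apply IHphi; auto.
  - exact (qcf_eq (fun b c => sat I (upd (upd rho x b) y c) phi) (fun b c => sat J (upd (upd rho x b) y c) phi)
      (fun b c => IHphi HIJ _)).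
Qed.

Lemma sat_ext_rho {M : Type} (I : Sym -> list M -> Prop) (phi : form Sym) :
  forall rho rho', (forall v, fv phi v -> rho v = rho' v) -> sat I rho phi = sat I rho' phi.
Proof.
  induction phi; intros rho rho' E; simpl in *.
  - f_equal. apply map_ext_in. auto.
  - rewrite (E x), (E y); auto.
  - rewrite (IHphi rho rho'); auto.
  - rewrite (IHphi1 rho rho'), (IHphi2 rho rho'); auto.
  - f_equal. extensionality a. apply IHphi. intros v Hv. unfold upd.
    destruct (Nat.eqb_spec v x); auto.
  - apply (qcf_eq (fun b c => sat I (upd (upd rho x b) y c) phi) (fun b c => sat I (upd (upd rho' x b) y c) phi)).
    intros b c. apply IHphi. intros v Hv. unfold upd.
    destruct (Nat.eqb_spec v y); auto. destruct (Nat.eqb_spec v x); auto.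
Qed.

Lemma sat_closed {M : Type} (I : Sym -> list M -> Prop) (phi : form Sym) rho rho' :
  (forall v, ~ fv phi v) -> sat I rho phi = sat I rho' phi.
Proof. intros C. apply sat_ext_rho. intros v Hv. exfalso; exact (C v Hv). Qed.

Lemma sat_rename {M : Type} (I : Sym -> list M -> Prop) (g : Sym -> Sym) (phi : form Sym) :
  forall rho, sat I rho (rename g phi) = sat (fun s => I (g s)) rho phi.
Proof.
  induction phi; intros rho; simpl.
  - reflexivity.
  - reflexivity.
  - rewrite IHphi; auto.
  - rewrite IHphi1, IHphi2; auto.
  - f_equal. extensionality a. apply IHphi.
  - apply (qcf_eq (fun b c => sat I (upd (upd rho x b) y c) (rename g phi)) (fun b c => sat (fun s => I (g s)) (upd (upd rho x b) y c) phi)).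
    intros b c. apply IHphi.
Qed.

Lemma rename_ext (g g' : Sym -> Sym) (phi : form Sym) :
  (forall s, occurs phi s -> g s = g' s) -> rename g phi = rename g' phi.
Proof. induction phi; intros E; simpl in *; f_equal; auto. Qed.

Lemma rename_comp (f g : Sym -> Sym) (phi : form Sym) :
  rename g (rename f phi) = rename (fun s => g (f s)) phi.
Proof. induction phi; simpl; f_equal; auto. Qed.

Lemma rename_id (phi : form Sym) : rename (fun s => s) phi = phi.
Proof. induction phi; simpl; f_equal; auto. Qed.

Lemma occurs_rename (g : Sym -> Sym) (phi : form Sym) t :
  occurs (rename g phi) t <-> exists s, occurs phi s /\ g s = t.
Proof.
  induction phi; simpl.
  - split; [intros <-; eauto|intros [s [-> <-]]; auto].
  - split; [tauto|intros [s [[] _]]].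
  - auto.
  - rewrite IHphi1, IHphi2. split.
    + intros [[s [H1 H2]]|[s [H1 H2]]]; eauto.
    + intros [s [[H1|H1] H2]]; eauto.
  - auto.
  - auto.
Qed.

Lemma fv_rename (g : Sym -> Sym) (phi : form Sym) v : fv (rename g phi) v <-> fv phi v.
Proof. induction phi; simpl; try tauto; try rewrite IHphi; try rewrite IHphi1, IHphi2; tauto. Qed.

Lemma wf_rename (ar : Sym -> nat) (g : Sym -> Sym) (phi : form Sym) :
  (forall s, occurs phi s -> ar (g s) = ar s) -> wf ar phi -> wf ar (rename g phi).
Proof.
  induction phi; simpl; intros A W; auto.
  - rewrite A; auto.
  - destruct W; split; auto.
Qed.

Lemma wf_rename_inv (ar : Sym -> nat) (g : Sym -> Sym) (phi : form Sym) :
  (forall s, occurs phi s -> ar (g s) = ar s) -> wf ar (rename g phi) -> wf ar phi.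
Proof.
  induction phi; simpl; intros A W; auto.
  - rewrite <- A; auto.
  - destruct W; split; auto.
Qed.

Fixpoint syms (phi : form Sym) : list Sym :=
  match phi with
  | FAtom R _ => [R]
  | FEq _ _ => []
  | FNeg p => syms p
  | FAnd p q => syms p ++ syms q
  | FEx _ p => syms p
  | FQcf _ _ p => syms p
  end.

Lemma syms_occurs phi s : occurs phi s <-> In s (syms phi).
Proof.
  induction phi; simpl; try tauto.
  - rewrite in_app_iff. tauto.
Qed.

Definition top : form Sym := @FEx Sym 0 (@FEq Sym 0 0).

Fixpoint conj (l : list (form Sym)) : form Sym :=
  match l with
  | [] => top
  | phi :: l => FAnd phi (conj l)
  end.

Lemma sat_conj {M : Type} (m0 : M) (I : Sym -> list M -> Prop) rho l :
  sat I rho (conj l) <-> forall phi, In phi l -> sat I rho phi.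
Proof.
  induction l as [|psi l IH]; simpl.
  - split; [tauto|]. intros _. exists m0. reflexivity.
  - rewrite IH. split.
    + intros [H1 H2] phi [<-|H]; auto.
    + intros H; split; auto.
Qed.

Lemma occurs_conj l s : occurs (conj l) s <-> exists phi, In phi l /\ occurs phi s.
Proof.
  induction l as [|psi l IH]; simpl.
  - split; [tauto|intros [phi [[] _]]].
  - rewrite IH. split.
    + intros [H|[phi [H1 H2]]]; eauto.
    + intros [phi [[<-|H1] H2]]; eauto.
Qed.

Lemma sentence_conj ar tau l : (forall phi, In phi l -> sentence_of ar tau phi) -> sentence_of ar tau (conj l).
Proof.
  induction l as [|psi l IH]; simpl; intros H.
  - split; [exact I|split]. + intros v [N [E|E]]; contradiction. + intros s [].
  - destruct (H psi (or_introl eq_refl)) as [W [C O]].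
    destruct (IH (fun phi Hp => H phi (or_intror Hp))) as [W' [C' O']].
    split; [split; auto|split].
    + intros v [Hv|Hv]; [exact (C v Hv)|exact (C' v Hv)].
    + intros s [Hs|Hs]; auto.
Qed.

Lemma sentence_mono ar (tau tau' : Sym -> Prop) phi :
  (forall s, tau s -> tau' s) -> sentence_of ar tau phi -> sentence_of ar tau' phi.
Proof. intros T [W [C O]]. split; auto. Qed.

Definition models {M : Type} (I : Sym -> list M -> Prop) (l : list (form Sym)) :=
  forall phi, In phi l -> forall rho : nat -> M, sat I rho phi.

Lemma cons_mono (A B : form Sym -> Prop) : consistent A -> (forall phi, B phi -> A phi) -> consistent B.
Proof. intros HA BA l Hl. apply HA. auto. Qed.

Lemma list_split (S : form Sym -> Prop) (l : list (form Sym)) :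
  exists l1 l2, (forall phi, In phi l1 -> S phi) /\ (forall phi, In phi l2 -> ~ S phi) /\
     (forall phi, In phi l <-> In phi l1 \/ In phi l2).
Proof.
  induction l as [|a l [l1 [l2 [H1 [H2 H3]]]]].
  - exists [], []. simpl. tauto.
  - destruct (classic (S a)) as [Sa|Sa].
    + exists (a :: l1), l2. simpl. split; [intros phi [<-|H]; auto|split; auto].
      intro phi. rewrite H3. tauto.
    + exists l1, (a :: l2). simpl. split; auto. split; [intros phi [<-|H]; auto|].
      intro phi. rewrite H3. tauto.
Qed.

Lemma incons_add (S : form Sym -> Prop) phi :
  ~ consistent (fun psi => S psi \/ psi = phi) ->
  exists l, (forall psi, In psi l -> S psi) /\
    forall (M : Type) (m0 : M) (I : Sym -> list M -> Prop), models I l -> ~ (forall rho, sat I rho phi).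
Proof.
  intros N. apply not_all_ex_not in N. destruct N as [l0 N].
  apply imply_to_and in N. destruct N as [Hl0 N].
  destruct (list_split S l0) as [l1 [l2 [H1 [H2 H3]]]].
  exists l1. split; auto.
  intros M m0 I Ml1 Hphi. apply N. exists M, m0, I.
  intros psi Hpsi. apply H3 in Hpsi. destruct Hpsi as [Hp|Hp]; auto.
  destruct (Hl0 psi (proj2 (H3 psi) (or_intror Hp))) as [Sp|Ep].
  - exfalso. exact (H2 psi Hp Sp).
  - subst. auto.
Qed.

Lemma chain_list (Sig : form Sym -> Prop) (F : (form Sym -> Prop) -> Prop) (l : list (form Sym)) :
  (forall X Y, F X -> F Y -> (forall t, X t -> Y t) \/ (forall t, Y t -> X t)) ->
  (forall phi, In phi l -> Sig phi \/ exists X, F X /\ X phi) ->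
  (forall phi, In phi l -> Sig phi) \/ exists X, F X /\ forall phi, In phi l -> Sig phi \/ X phi.
Proof.
  intros Ftot. induction l as [|a l IH]; intros Hl.
  - left. intros _ [].
  - destruct (IH (fun phi H => Hl phi (or_intror H))) as [IH1|[X [FX HX]]].
    + destruct (Hl a (or_introl eq_refl)) as [Sa|[Y [FY Ya]]].
      * left. intros phi [<-|H]; auto.
      * right. exists Y. split; auto. intros phi [<-|H]; auto.
    + right. destruct (Hl a (or_introl eq_refl)) as [Sa|[Y [FY Ya]]].
      * exists X. split; auto. intros phi [<-|H]; auto.
      * destruct (Ftot X Y FX FY) as [XY|YX].
        -- exists Y. split; auto. intros phi [<-|H]; auto. destruct (HX phi H); auto.
        -- exists X. split; auto. intros phi [<-|H]; auto.
Qed.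

Lemma cons_chain (Sig : form Sym -> Prop) (F : (form Sym -> Prop) -> Prop) :
  consistent Sig ->
  (forall X, F X -> consistent (fun phi => Sig phi \/ X phi)) ->
  (forall X Y, F X -> F Y -> (forall t, X t -> Y t) \/ (forall t, Y t -> X t)) ->
  consistent (fun phi => Sig phi \/ exists X, F X /\ X phi).
Proof.
  intros CS CF Ftot l Hl.
  destruct (chain_list Sig F l Ftot Hl) as [H|[X [FX HX]]].
  - apply CS. auto.
  - apply (CF X FX). auto.
Qed.

Lemma lindenbaum ar (tau : Sym -> Prop) (Sig : form Sym -> Prop) :
  (forall phi, Sig phi -> sentence_of ar tau phi) -> consistent Sig ->
  exists Sig', (forall phi, Sig phi -> Sig' phi) /\ consistent Sig' /\
    (forall phi, Sig' phi -> sentence_of ar tau phi) /\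
    (forall phi, sentence_of ar tau phi -> Sig' phi \/ Sig' (FNeg phi)).
Proof.
  intros Hs Hc.
  set (P := fun A : form Sym -> Prop => (forall phi, A phi -> sentence_of ar tau phi) /\
                                        consistent (fun phi => Sig phi \/ A phi)).
  destruct (ZW.zorn_sets _ P) as [A [[As Ac] Amax]].
  - intros F FP Ftot. split.
    + intros phi [X [FX Xp]]. exact (proj1 (FP X FX) phi Xp).
    + apply cons_chain; auto. intros X FX. exact (proj2 (FP X FX)).
  - exists (fun phi => Sig phi \/ A phi). split; [auto|split; [exact Ac|split]].
    + intros phi [H|H]; auto.
    + intros phi Sphi.
      destruct (classic (Sig phi \/ A phi)) as [H|H]; [left; exact H|].
      destruct (classic (Sig (FNeg phi) \/ A (FNeg phi))) as [H'|H']; [right; exact H'|].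
      exfalso.
      assert (N1 : ~ consistent (fun psi => (Sig psi \/ A psi) \/ psi = phi)).
      { intro C. apply H. right.
        apply (Amax (fun psi => A psi \/ psi = phi)).
        - split.
          + intros psi [Hp|Hp]; [auto|subst; auto].
          + apply (cons_mono _ _ C). intros psi. tauto.
        - auto.
        - auto. }
      assert (N2 : ~ consistent (fun psi => (Sig psi \/ A psi) \/ psi = FNeg phi)).
      { intro C. apply H'. right.
        apply (Amax (fun psi => A psi \/ psi = FNeg phi)).
        - split.
          + intros psi [Hp|Hp]; [auto|subst].
            destruct Sphi as [W [Cl O]]. split; [exact W|split; auto].
          + apply (cons_mono _ _ C). intros psi. tauto.
        - auto.
        - auto. }
      apply incons_add in N1. apply incons_add in N2.
      destruct N1 as [l1 [H1 N1]]. destruct N2 as [l2 [H2 N2]].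
      destruct (Ac (l1 ++ l2)) as [M [m0 [I MI]]].
      { intros psi Hp. apply in_app_or in Hp. destruct Hp; auto. }
      assert (M1 : models I l1) by (intros psi Hp; apply MI; apply in_or_app; auto).
      assert (M2 : models I l2) by (intros psi Hp; apply MI; apply in_or_app; auto).
      apply (N1 M m0 I M1). intros rho.
      destruct (classic (sat I rho phi)) as [S1|S1]; auto.
      exfalso. apply (N2 M m0 I M2). intros rho'. simpl.
      rewrite (sat_closed I phi rho' rho); auto.
      exact (proj1 (proj2 Sphi)).
Qed.

End Logic1.

From Stdlib Require Import List Arith Lia Classical ClassicalEpsilon.
Import ListNotations.
Set Bullet Behavior "Strict Subproofs".

Fixpoint idx {A : Type} (x : A) (l : list A) : nat :=
  match l with
  | [] => 0
  | y :: l => if excluded_middle_informative (x = y) then 0 else S (idx x l)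
  end.

Lemma idx_lt {A : Type} (x : A) l : In x l -> idx x l < length l.
Proof.
  induction l as [|y l IH]; simpl; [tauto|].
  destruct (excluded_middle_informative (x = y)); [lia|].
  intros [E|H]; [congruence|]. specialize (IH H). lia.
Qed.

Lemma nth_idx {A : Type} (x : A) l d : In x l -> nth (idx x l) l d = x.
Proof.
  induction l as [|y l IH]; simpl; [tauto|].
  destruct (excluded_middle_informative (x = y)); [congruence|].
  intros [E|H]; [congruence|]. auto.
Qed.

Lemma idx_nth {A : Type} (l : list A) i d : NoDup l -> i < length l -> idx (nth i l d) l = i.
Proof.
  revert i. induction l as [|y l IH]; simpl; intros i ND Hi; [lia|].
  inversion ND as [|? ? Ny ND']; subst.
  destruct i as [|i].
  - destruct (excluded_middle_informative (y = y)); congruence.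
  - destruct (excluded_middle_informative (nth i l d = y)) as [E|E].
    + exfalso. apply Ny. rewrite <- E. apply nth_In. lia.
    + rewrite IH; auto. lia.
Qed.

Lemma nth_indep' {A : Type} (l : list A) i d d' : i < length l -> nth i l d = nth i l d'.
Proof. apply nth_indep. Qed.

Lemma NoDup_nth_inj {A : Type} (l : list A) i j d : NoDup l -> i < length l -> j < length l ->
  nth i l d = nth j l d -> i = j.
Proof.
  intros ND Hi Hj E. rewrite <- (idx_nth l i d ND Hi), <- (idx_nth l j d ND Hj), E. reflexivity.
Qed.

From Stdlib Require Import List Arith Lia Classical ClassicalEpsilon FunctionalExtensionality PropExtensionality ProofIrrelevance.
Import ListNotations.
Set Bullet Behavior "Strict Subproofs".

Section Fresh.
Variable Sym : Type.
Variable ar : Sym -> nat.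
Variable K : Type.
Variable h : nat -> K.
Hypothesis hinj : forall m n, h m = h n -> m = n.
Hypothesis Hbig : forall n, exists h : K -> {s : Sym | ar s = n}, injective h.

Lemma fresh1 (tau : Sym -> Prop) n (E : list Sym) : card_lt K tau ->
  exists x, ar x = n /\ ~ tau x /\ ~ In x E.
Proof.
  intros Hc. destruct (card_lt_to Sym K h _ (card_lt_app Sym K h hinj tau E Hc)) as [_ N].
  apply NNPP. intro C. apply N. destruct (Hbig n) as [H Hinj].
  exists (fun k => proj1_sig (H k)). split.
  - intro k. destruct (classic (tau (proj1_sig (H k)) \/ In (proj1_sig (H k)) E)) as [A|A]; auto.
    exfalso. apply C. exists (proj1_sig (H k)). split; [exact (proj2_sig (H k))|tauto].
  - intros a b Eab. apply Hinj. destruct (H a), (H b). simpl in Eab. subst. f_equal. apply proof_irrelevance.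
Qed.

Lemma fresh_list (tau : Sym -> Prop) (S E : list Sym) : card_lt K tau ->
  exists Fr, NoDup Fr /\ length Fr = length S /\
    (forall i d d', i < length S -> ar (nth i Fr d) = ar (nth i S d')) /\
    (forall s, In s Fr -> ~ tau s /\ ~ In s E).
Proof.
  intros Hc. induction S as [|a S IH].
  - exists []. simpl. split; [constructor|split; [auto|split; [intros; lia|tauto]]].
  - destruct IH as [Fr [ND [L [A D]]]].
    destruct (fresh1 tau (ar a) (E ++ Fr) Hc) as [x [ax [tx Ex]]].
    exists (x :: Fr). split; [|split; [simpl; auto|split]].
    + constructor; auto. intro I. apply Ex. apply in_or_app. auto.
    + intros [|i] d d' Hi; simpl; auto. apply A. simpl in Hi. lia.
    + intros s [<-|Hs]; auto. split; auto. intro I. apply Ex. apply in_or_app. auto.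
Qed.
End Fresh.

From Stdlib Require Import List Arith Lia Classical ClassicalEpsilon FunctionalExtensionality PropExtensionality ProofIrrelevance.
Import ListNotations.
Set Bullet Behavior "Strict Subproofs".

Lemma filter_ex {A : Type} (P : A -> Prop) (l : list A) :
  exists l', NoDup l' /\ forall x, In x l' <-> In x l /\ P x.
Proof.
  induction l as [|a l [l' [N H]]].
  - exists []. split; [constructor|]. simpl; tauto.
  - destruct (classic (P a /\ ~ In a l')) as [[Pa Na]|C].
    + exists (a :: l'). split; [constructor; auto|].
      intros x. simpl. rewrite H. split.
      * intros [<-|[H1 H2]]; auto.
      * intros [[<-|H1] H2]; auto.
    + exists l'. split; auto. intros x. rewrite H. simpl. split.
      * tauto.
      * intros [[E|H1] H2]; [subst a|auto]. destruct (classic (In x l')) as [I|I].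
        -- apply H in I. tauto.
        -- exfalso. apply C. auto.
Qed.

Section Parts.
Variable Sym : Type.
Variable ar : Sym -> nat.
Variable K : Type.

Lemma part2 (T : theory Sym) : T_lt ar K T ->
  exists T' : theory Sym, T_c ar K T' /\ (forall s, voc T' s <-> voc T s) /\
    (forall phi, sens T phi -> sens T' phi).
Proof.
  intros [Hth [Hc Hcard]].
  destruct (lindenbaum Sym ar (voc T) (sens T) Hth Hc) as [S' [H1 [H2 [H3 H4]]]].
  exists (Theory (voc T) S'). split; [split; [split; [exact H3|split; [exact H2|exact Hcard]]|]|].
  - exact H4.
  - simpl. split; [tauto|exact H1].
Qed.

Lemma ec_ab (T0 : theory Sym) : T_ec ar K T0 -> T_ab ar K T0.
Proof.
  intros [Tc0 Hec]. split; [exact Tc0|].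
  intros T1 T2 Hvoc [Th1 [Hc1 _]] [Th2 [Hc2 _]] Hsens l Hl.
  destruct (list_split Sym (sens T1) l) as [l1 [l2 [H1 [H2 H3]]]].
  assert (H2' : forall phi, In phi l2 -> sens T2 phi).
  { intros phi Hp. destruct (Hl phi (proj2 (H3 phi) (or_intror Hp))) as [A|A]; auto.
    exfalso. exact (H2 phi Hp A). }
  set (psi1 := conj Sym l1).
  destruct (filter_ex (fun s => ~ voc T0 s) (syms Sym psi1)) as [S1 [ND HS1]].
  assert (sent1 : sentence_of ar (voc T1) psi1).
  { apply sentence_conj. intros phi Hp. apply Th1. auto. }
  assert (S1T1 : forall s, In s S1 -> voc T1 s /\ ~ voc T0 s).
  { intros s Hs. apply HS1 in Hs. destruct Hs as [Hs N]. split; auto.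
    apply (proj2 (proj2 sent1)). apply syms_occurs. exact Hs. }
  assert (sentS : sentence_of ar (fun s => voc T0 s \/ In s S1) psi1).
  { destruct sent1 as [W [C O]]. split; [exact W|split; [exact C|]].
    intros s Os. destruct (classic (voc T0 s)) as [V|V]; [left; exact V|right].
    apply HS1. split; auto. apply syms_occurs. exact Os. }
  assert (cons1 : consistent (fun phi => sens T0 phi \/ phi = psi1)).
  { intros l' Hl'.
    destruct (list_split Sym (sens T0) l') as [la [lb [Ha [Hb Hab]]]].
    destruct (Hc1 (la ++ l1)) as [M [m0 [I MI]]].
    { intros phi Hp. apply in_app_or in Hp. destruct Hp as [Hp|Hp]; auto.
      apply (proj1 (Hsens phi)). auto. }
    exists M, m0, I. intros phi Hp rho. apply Hab in Hp. destruct Hp as [Hp|Hp].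
    - apply MI. apply in_or_app. auto.
    - destruct (Hl' phi (proj2 (Hab phi) (or_intror Hp))) as [A|A].
      + exfalso. exact (Hb phi Hp A).
      + subst phi. apply (sat_conj Sym m0). intros phi Hp'. apply MI. apply in_or_app. auto. }
  destruct (Hec S1 psi1 ND (fun s Hs => proj2 (S1T1 s Hs)) sentS cons1)
    as [S' [_ [_ [_ [_ [g [_ [gid gT0]]]]]]]].
  destruct (Hc2 (rename g psi1 :: l2)) as [M [m0 [I MI]]].
  { intros phi [<-|Hp]; auto. apply (proj1 (Hsens _)). exact gT0. }
  set (I' := fun s => if excluded_middle_informative (In s S1) then I (g s) else I s).
  exists M, m0, I'. intros phi Hp rho. apply H3 in Hp. destruct Hp as [Hp|Hp].
  - assert (E : sat I' rho psi1 = sat I rho (rename g psi1)).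
    { rewrite sat_rename. apply sat_ext_I. intros s Os. unfold I'.
      destruct (excluded_middle_informative (In s S1)) as [In1|In1]; auto.
      rewrite (gid s In1). reflexivity. }
    assert (S : sat I' rho psi1) by (rewrite E; apply MI; left; reflexivity).
    exact (proj1 (sat_conj Sym m0 I' rho l1) S phi Hp).
  - rewrite (sat_ext_I Sym I' I phi).
    + apply MI. right. exact Hp.
    + intros s Os. unfold I'.
      destruct (excluded_middle_informative (In s S1)) as [In1|In1]; auto.
      exfalso. destruct (S1T1 s In1) as [V1 V0]. apply V0.
      apply (proj2 (Hvoc s)). split; auto.
      exact (proj2 (proj2 (Th2 phi (H2' phi Hp))) s Os).
Qed.

Lemma part1 (T : theory Sym) :
  (T_c ar K T -> T_lt ar K T) /\ (T_ab ar K T -> T_c ar K T) /\ (T_ec ar K T -> T_ab ar K T).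
Proof.
  split; [intros [H _]; exact H|split; [intros [H _]; exact H|exact (ec_ab T)]].
Qed.

Hypothesis Kinf : exists h : nat -> K, injective h.

Lemma part3 (I : Type) (Ti : I -> theory Sym) (T : theory Sym) :
  (forall i j, i <> j -> forall s, voc (Ti i) s /\ voc (Ti j) s <-> voc T s) ->
  (forall i, T_lt ar K (Ti i)) ->
  T_ab ar K T ->
  (forall i phi, sens T phi -> sens (Ti i) phi) ->
  consistent (fun phi => exists i, sens (Ti i) phi).
Proof.
  intros Hv Hlt [[[ThT [HcT HcardT]] HcompT] Hab] HTi.
  destruct Kinf as [h hinj].
  assert (claim : forall is : list I, NoDup is -> forall l : list (form Sym),
     (forall phi, In phi l -> sens T phi \/ exists i, In i is /\ sens (Ti i) phi) ->
     consistent (fun phi => sens T phi \/ In phi l)).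
  { intros is. induction is as [|i is' IH]; intros ND l Hl.
    - apply (cons_mono Sym _ _ HcT). intros phi [H|H]; auto.
      destruct (Hl phi H) as [A|[i [[] _]]]; auto.
    - inversion ND as [|? ? Ni ND']; subst.
      destruct (list_split Sym (sens (Ti i)) l) as [l2 [l1 [H2 [H1 H12]]]].
      assert (Hl1 : forall phi, In phi l1 -> sens T phi \/ exists j, In j is' /\ sens (Ti j) phi).
      { intros phi Hp. destruct (Hl phi (proj2 (H12 phi) (or_intror Hp))) as [A|[j [[E|Ij] Sj]]]; auto.
        - subst j. exfalso. exact (H1 phi Hp Sj).
        - right. eauto. }
      destruct is' as [|j is''].
      + destruct (Hlt i) as [_ [Hci _]].
        apply (cons_mono Sym _ _ Hci). intros phi [A|A]; auto.
        apply H12 in A. destruct A as [A|A]; auto.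
        destruct (Hl1 phi A) as [B|[k [[] _]]]; auto.
      + assert (ij : i <> j) by (intro E; apply Ni; left; auto).
        assert (TTi : forall s, voc T s -> voc (Ti i) s) by (intros s Hs; apply (Hv i j ij s); auto).
        pose proof (IH ND' l1 Hl1) as Cons1.
        set (F1 := flat_map (syms Sym) l1).
        set (T1 := Theory (fun s => voc T s \/ In s F1) (fun phi => sens T phi \/ In phi l1)).
        assert (occF1 : forall phi s, In phi l1 -> occurs phi s -> In s F1).
        { intros phi s Hp Os. apply in_flat_map. exists phi. split; auto. apply syms_occurs; auto. }
        assert (sentl1 : forall phi, In phi l1 -> exists tau, sentence_of ar tau phi /\
                   forall s, occurs phi s -> voc (Ti i) s -> voc T s).
        { intros phi Hp. destruct (Hl1 phi Hp) as [A|[k [Ik Sk]]].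
          - exists (voc T). split; [exact (ThT phi A)|intros s Os _; exact (proj2 (proj2 (ThT phi A)) s Os)].
          - assert (ik : i <> k) by (intro E; subst; auto).
            destruct (Hlt k) as [Thk _].
            exists (voc (Ti k)). split; auto.
            intros s Os Vi. apply (Hv i k ik s). split; auto.
            exact (proj2 (proj2 (Thk phi Sk)) s Os). }
        assert (C : consistent (fun phi => sens T1 phi \/ sens (Ti i) phi)).
        { apply Hab.
          - intros s. simpl. split.
            + intros Vs. split; auto.
            + intros [[A|A] B]; auto.
              unfold F1 in A. apply in_flat_map in A. destruct A as [phi [Hp Os]].
              destruct (sentl1 phi Hp) as [tau [_ Hs]]. apply Hs; auto. apply syms_occurs; auto.
          - split; [|split].
            + intros phi [A|A]; simpl.
              * apply (sentence_mono Sym ar (voc T)); auto.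
              * destruct (sentl1 phi A) as [tau [[W [Cl O]] _]]. split; auto. split; auto.
                intros s Os. right. apply (occF1 phi); auto.
            + exact Cons1.
            + apply (card_lt_app Sym K h hinj). exact HcardT.
          - apply Hlt.
          - intros phi. simpl. split.
            + intros A. split; auto.
            + intros [[A|A] B]; auto. exfalso. exact (H1 phi A B). }
        apply (cons_mono Sym _ _ C). intros phi [A|A]; simpl.
        * left; left; exact A.
        * apply H12 in A. destruct A as [A|A]; [right; auto|left; right; auto]. }
  intros l Hl.
  assert (idx : exists is : list I, forall phi, In phi l -> exists i, In i is /\ sens (Ti i) phi).
  { clear claim. induction l as [|a l IH].
    - exists []. intros _ [].
    - destruct IH as [is His]; [intros; apply Hl; right; auto|].
      destruct (Hl a (or_introl eq_refl)) as [i Si].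
      exists (i :: is). intros phi [<-|Hp].
      + exists i. simpl. auto.
      + destruct (His phi Hp) as [j [Ij Sj]]. exists j. simpl. auto. }
  destruct idx as [is His].
  destruct (filter_ex (fun _ => True) is) as [is' [ND His']].
  apply (claim is' ND l).
  - intros phi Hp. right. destruct (His phi Hp) as [j [Ij Sj]]. exists j. split; auto.
    apply His'. auto.
  - intros phi Hp. right. exact Hp.
Qed.

End Parts.

From Stdlib Require Import List Arith Lia Classical ClassicalEpsilon FunctionalExtensionality PropExtensionality ProofIrrelevance.
Import ListNotations.
Set Bullet Behavior "Strict Subproofs".

Lemma NoDup_map_on {A B : Type} (f : A -> B) (l : list A) :
  (forall x y, In x l -> In y l -> f x = f y -> x = y) -> NoDup l -> NoDup (map f l).
Proof.
  induction l as [|a l IH]; simpl; intros Hf ND; [constructor|].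
  inversion ND as [|? ? Na ND']; subst. constructor.
  - intro Hin. apply in_map_iff in Hin. destruct Hin as [x [E Hx]].
    apply Na. rewrite (Hf a x); auto.
  - apply IH; auto.
Qed.

Lemma cons_conj {Sym : Type} (Sig : form Sym -> Prop) l :
  consistent Sig -> (forall phi, In phi l -> Sig phi) -> consistent (fun phi => Sig phi \/ phi = conj Sym l).
Proof.
  intros C Hl l' Hl'.
  destruct (list_split Sym Sig l') as [la [lb [Ha [Hb Hab]]]].
  destruct (C (la ++ l)) as [M [m0 [I MI]]].
  { intros phi Hp. apply in_app_or in Hp. destruct Hp; auto. }
  exists M, m0, I. intros phi Hp rho. apply Hab in Hp. destruct Hp as [Hp|Hp].
  - apply MI. apply in_or_app. auto.
  - destruct (Hl' phi (proj2 (Hab phi) (or_intror Hp))) as [A|A].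
    + exfalso. exact (Hb phi Hp A).
    + subst phi. apply (sat_conj Sym m0). intros phi Hp'. apply MI. apply in_or_app. auto.
Qed.

Section P5.
Variable Sym : Type.
Variable ar : Sym -> nat.
Variable K : Type.
Variable h : nat -> K.
Hypothesis hinj : forall m n, h m = h n -> m = n.
Hypothesis Hbig : forall n, exists h : K -> {s : Sym | ar s = n}, injective h.
Variable T : theory Sym.
Variable f : Sym -> Sym.
Variable tau2 : Sym -> Prop.
Hypothesis finj : forall s t, voc T s -> voc T t -> f s = f t -> s = t.
Hypothesis far : forall s, voc T s -> ar (f s) = ar s.
Hypothesis Htau2 : forall t, tau2 t <-> exists s, voc T s /\ f s = t.

Definition finv t := choose_or t (fun t s => voc T s /\ f s = t) t.

Lemma finv_spec t : tau2 t -> voc T (finv t) /\ f (finv t) = t.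
Proof. intro H. apply (choose_or_spec t (fun t s => voc T s /\ f s = t) t). apply Htau2. exact H. Qed.

Lemma finv_f s : voc T s -> finv (f s) = s.
Proof.
  intro Hs. assert (H : tau2 (f s)) by (apply Htau2; eauto).
  destruct (finv_spec _ H) as [H1 H2]. apply finj; auto.
Qed.

Lemma finv_ar t : tau2 t -> ar (finv t) = ar t.
Proof. intro H. destruct (finv_spec t H) as [H1 H2]. rewrite <- (far _ H1), H2. reflexivity. Qed.

Let T' := rename_theory f tau2 T.

Lemma preimages (l : list (form Sym)) : (forall psi, In psi l -> sens T' psi) ->
  exists l0, (forall phi, In phi l0 -> sens T phi) /\ forall psi, In psi l -> exists phi, In phi l0 /\ psi = rename f phi.
Proof.
  induction l as [|a l IH]; intros Hl.
  - exists []. split; [intros _ []|intros _ []].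
  - destruct IH as [l0 [H1 H2]]; [intros; apply Hl; right; auto|].
    destruct (Hl a (or_introl eq_refl)) as [phi [Sphi E]].
    exists (phi :: l0). split.
    + intros x [<-|Hx]; auto.
    + intros psi [<-|Hp].
      * exists phi. simpl. auto.
      * destruct (H2 psi Hp) as [x [Hx Ex]]. exists x. simpl. auto.
Qed.

Lemma sat_f {M : Type} (I : Sym -> list M -> Prop) rho phi :
  sens T phi -> is_theory ar T -> sat I rho (rename f phi) = sat (fun s => I (f s)) rho phi.
Proof. intros _ _. apply sat_rename. Qed.

Lemma lt_transfer : T_lt ar K T -> T_lt ar K T'.
Proof.
  intros [Th [Hc Hcard]]. split; [|split].
  - intros psi [phi [Sphi ->]]. destruct (Th phi Sphi) as [W [Cl O]].
    split; [|split].
    + apply wf_rename; auto.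
    + intros v Hv. apply fv_rename in Hv. exact (Cl v Hv).
    + intros t Ot. apply occurs_rename in Ot. destruct Ot as [s [Os <-]]. simpl. apply Htau2. eauto.
  - intros l Hl. destruct (preimages l Hl) as [l0 [H1 H2]].
    destruct (Hc l0 H1) as [M [m0 [I MI]]].
    exists M, m0, (fun t => I (finv t)). intros psi Hp rho.
    destruct (H2 psi Hp) as [phi [Hphi ->]].
    rewrite sat_rename. rewrite (sat_ext_I Sym _ I phi); [apply MI; auto|].
    intros s Os. rewrite finv_f; auto. exact (proj2 (proj2 (Th phi (H1 phi Hphi))) s Os).
  - destruct (card_lt_to Sym K h _ Hcard) as [[F Finj] N]. simpl.
    apply card_lt_of.
    + exists (fun t => F (finv t)). intros x y Hx Hy E.
      apply Finj in E; try apply finv_spec; auto.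
      rewrite <- (proj2 (finv_spec x Hx)), <- (proj2 (finv_spec y Hy)), E. reflexivity.
    + intros [g [gt ginj]]. apply N. exists (fun k => finv (g k)). split.
      * intro k. apply finv_spec. auto.
      * intros a b E. apply ginj.
        rewrite <- (proj2 (finv_spec _ (gt a))), <- (proj2 (finv_spec _ (gt b))), E. reflexivity.
Qed.

Lemma c_transfer : T_c ar K T -> T_c ar K T'.
Proof.
  intros [Hlt Hcomp]. split; [apply lt_transfer; auto|].
  intros psi [W [Cl O]]. simpl in O.
  set (phi := rename finv psi).
  assert (Ephi : rename f phi = psi).
  { unfold phi. rewrite rename_comp. rewrite <- (rename_id Sym psi) at 2. apply rename_ext.
    intros s Os. apply finv_spec. auto. }
  assert (Sphi : sentence_of ar (voc T) phi).
  { split; [|split].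
    - apply wf_rename; auto. intros s Os. apply finv_ar. auto.
    - intros v Hv. apply fv_rename in Hv. exact (Cl v Hv).
    - intros t Ot. apply occurs_rename in Ot. destruct Ot as [s [Os <-]]. apply finv_spec. auto. }
  destruct (Hcomp phi Sphi) as [A|A].
  - left. exists phi. auto.
  - right. exists (FNeg phi). split; auto. simpl. rewrite Ephi. reflexivity.
Qed.

Lemma pullback (U : list Sym) : card_lt K (voc T) -> NoDup U -> (forall t, In t U -> ~ tau2 t) ->
  exists (Fr : list Sym) (r rinv : Sym -> Sym),
    NoDup Fr /\ length Fr = length U /\ (forall s, In s Fr -> ~ voc T s) /\
    (forall i d d', i < length U -> ar (nth i Fr d) = ar (nth i U d')) /\
    (forall t, tau2 t -> r t = finv t) /\
    (forall t, In t U -> r t = nth (idx t U) Fr t) /\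
    (forall t, tau2 t \/ In t U -> rinv (r t) = t) /\
    (forall s, voc T s -> rinv s = f s) /\
    (forall t, tau2 t \/ In t U -> ar (r t) = ar t) /\
    (forall t, tau2 t -> voc T (r t)) /\
    (forall t, In t U -> In (r t) Fr).
Proof.
  intros Hc ND HU.
  destruct (fresh_list Sym ar K h hinj Hbig (voc T) U [] Hc) as [Fr [NDF [LF [AF DF]]]].
  set (r := fun t => if excluded_middle_informative (tau2 t) then finv t
                     else if excluded_middle_informative (In t U) then nth (idx t U) Fr t else t).
  set (rinv := fun u => if excluded_middle_informative (voc T u) then f u
                     else if excluded_middle_informative (In u Fr) then nth (idx u Fr) U u else u).
  assert (rT : forall t, tau2 t -> r t = finv t).
  { intros t Ht. unfold r. destruct (excluded_middle_informative (tau2 t)); tauto. }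
  assert (rU : forall t, In t U -> r t = nth (idx t U) Fr t).
  { intros t Ht. unfold r. destruct (excluded_middle_informative (tau2 t)) as [A|A].
    - exfalso. exact (HU t Ht A).
    - destruct (excluded_middle_informative (In t U)); tauto. }
  assert (rUF : forall t, In t U -> In (r t) Fr).
  { intros t Ht. rewrite rU; auto. apply nth_In. rewrite LF. apply idx_lt. auto. }
  exists Fr, r, rinv.
  split; [auto|split; [auto|split; [intros s Hs; exact (proj1 (DF s Hs))|split; [auto|]]]].
  split; [auto|split; [auto|split; [|split; [|split; [|split]]]]].
  - intros t [Ht|Ht].
    + rewrite rT; auto. destruct (finv_spec t Ht) as [H1 H2]. unfold rinv.
      destruct (excluded_middle_informative (voc T (finv t))); tauto.
    + pose proof (rUF t Ht) as HF. unfold rinv.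
      destruct (excluded_middle_informative (voc T (r t))) as [A|A].
      * exfalso. exact (proj1 (DF _ HF) A).
      * destruct (excluded_middle_informative (In (r t) Fr)) as [_|B]; [|contradiction].
        rewrite rU at 1; auto. rewrite idx_nth; auto.
        -- apply nth_idx. auto.
        -- rewrite LF. apply idx_lt. auto.
  - intros s Hs. unfold rinv. destruct (excluded_middle_informative (voc T s)); tauto.
  - intros t [Ht|Ht].
    + rewrite rT; auto. apply finv_ar; auto.
    + rewrite rU; auto. rewrite AF with (d' := t); [|apply idx_lt; auto]. rewrite nth_idx; auto.
  - intros t Ht. rewrite rT; auto. apply finv_spec; auto.
  - exact rUF.
Qed.

Lemma pull_cons (r rinv : Sym -> Sym) (Dom : Sym -> Prop) (Sig : form Sym -> Prop) psi :
  is_theory ar T ->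
  (forall t, Dom t -> rinv (r t) = t) -> (forall s, voc T s -> rinv s = f s) ->
  consistent (fun phi => Sig phi \/ phi = psi) -> (forall phi, sens T' phi -> Sig phi) ->
  (forall t, occurs psi t -> Dom t) ->
  consistent (fun phi => sens T phi \/ phi = rename r psi).
Proof.
  intros Th Hri Hrf C HT' HD l' Hl'.
  destruct (list_split Sym (sens T) l') as [la [lb [Ha [Hb Hab]]]].
  destruct (C (psi :: map (rename f) la)) as [M [m0 [I MI]]].
  { intros phi [<-|Hp]; [right; reflexivity|left].
    apply in_map_iff in Hp. destruct Hp as [x [<- Hx]]. apply HT'. exists x. auto. }
  exists M, m0, (fun u => I (rinv u)). intros phi Hp rho. apply Hab in Hp. destruct Hp as [Hp|Hp].
  - assert (S : sat I rho (rename f phi)) by (apply MI; right; apply in_map; auto).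
    rewrite sat_rename in S. rewrite (sat_ext_I Sym _ (fun s => I (f s)) phi); auto.
    intros s Os. rewrite Hrf; auto. exact (proj2 (proj2 (Th phi (Ha phi Hp))) s Os).
  - destruct (Hl' phi (proj2 (Hab phi) (or_intror Hp))) as [A|A].
    + exfalso. exact (Hb phi Hp A).
    + subst phi. rewrite sat_rename. rewrite (sat_ext_I Sym _ I psi).
      * apply MI. left. reflexivity.
      * intros s Os. rewrite Hri; auto.
Qed.


Lemma ab_transfer : T_ab ar K T -> T_ab ar K T'.
Proof.
  intros [Tc Hab]. split; [apply c_transfer; auto|].
  destruct Tc as [[Th [Hc Hcard]] Hcomp].
  intros T1 T2 Hvoc [Th1 [Hc1 _]] [Th2 [Hc2 _]] Hsens l Hl. simpl in Hvoc.
  destruct (list_split Sym (sens T1) l) as [l1 [l2 [H1 [H2 H3]]]].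
  assert (H2' : forall phi, In phi l2 -> sens T2 phi).
  { intros phi Hp. destruct (Hl phi (proj2 (H3 phi) (or_intror Hp))) as [A|A]; auto.
    exfalso. exact (H2 phi Hp A). }
  set (psi1 := conj Sym l1). set (psi2 := conj Sym l2).
  assert (sent1 : sentence_of ar (voc T1) psi1) by (apply sentence_conj; intros phi Hp; apply Th1; auto).
  assert (sent2 : sentence_of ar (voc T2) psi2) by (apply sentence_conj; intros phi Hp; apply Th2; auto).
  destruct (filter_ex (fun t => ~ tau2 t) (syms Sym psi1 ++ syms Sym psi2)) as [U [NDU HU]].
  destruct (pullback U Hcard NDU (fun t Ht => proj2 (proj1 (HU t) Ht)))
    as [Fr [r [rinv [NDF [LF [DF [AF [rT [rU [rr [rf [ra [rTT rUF]]]]]]]]]]]]].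
  set (Dom := fun t => tau2 t \/ In t U).
  assert (D1 : forall t, occurs psi1 t -> Dom t).
  { intros t Ot. destruct (classic (tau2 t)) as [A|A]; [left; auto|right].
    apply HU. split; auto. apply in_or_app. left. apply syms_occurs. auto. }
  assert (D2 : forall t, occurs psi2 t -> Dom t).
  { intros t Ot. destruct (classic (tau2 t)) as [A|A]; [left; auto|right].
    apply HU. split; auto. apply in_or_app. right. apply syms_occurs. auto. }
  set (chi1 := rename r psi1). set (chi2 := rename r psi2).
  assert (sentchi : forall psi, sentence_of ar (fun _ => True) psi -> (forall t, occurs psi t -> Dom t) ->
            sentence_of ar (fun s => voc T s \/ In s (syms Sym (rename r psi))) (rename r psi)).
  { intros psi [W [Cl _]] HD. split; [|split].
    - apply wf_rename; auto. intros s Os. apply ra. apply HD. auto.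
    - intros v Hv. apply fv_rename in Hv. exact (Cl v Hv).
    - intros t Ot. right. apply syms_occurs. auto. }
  assert (A : forall s, occurs chi1 s -> occurs chi2 s -> voc T s).
  { intros s O1 O2. apply occurs_rename in O1. apply occurs_rename in O2.
    destruct O1 as [t1 [O1 E1]]. destruct O2 as [t2 [O2 E2]].
    assert (E : t1 = t2).
    { rewrite <- (rr t1 (D1 t1 O1)), <- (rr t2 (D2 t2 O2)), E1, E2. reflexivity. }
    subst t2.
    assert (Ht1 : tau2 t1).
    { apply Hvoc. split.
      - exact (proj2 (proj2 sent1) t1 O1).
      - exact (proj2 (proj2 sent2) t1 O2). }
    rewrite <- E1. apply rTT. auto. }
  assert (B : forall (Tj : theory Sym) lj, consistent (sens Tj) -> (forall phi, In phi lj -> sens Tj phi) ->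
            (forall phi, sens T' phi -> sens Tj phi) -> (forall t, occurs (conj Sym lj) t -> Dom t) ->
            consistent (fun phi => sens T phi \/ phi = rename r (conj Sym lj))).
  { intros Tj lj Cj Hlj HTj HD.
    apply (pull_cons r rinv Dom (sens Tj)); auto.
    apply cons_conj; auto. }
  assert (B1 : consistent (fun phi => sens T phi \/ phi = chi1)).
  { apply (B T1 l1 Hc1 H1); auto. intros phi Hp. apply (proj1 (Hsens phi) Hp). }
  assert (B2 : consistent (fun phi => sens T phi \/ phi = chi2)).
  { apply (B T2 l2 Hc2 H2'); auto. intros phi Hp. apply (proj1 (Hsens phi) Hp). }
  assert (sc1 : sentence_of ar (fun s => voc T s \/ In s (syms Sym chi1)) chi1).
  { apply sentchi; auto. destruct sent1 as [W [Cl _]]. split; auto. }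
  assert (sc2 : sentence_of ar (fun s => voc T s \/ In s (syms Sym chi2)) chi2).
  { apply sentchi; auto. destruct sent2 as [W [Cl _]]. split; auto. }
  assert (C : consistent (fun phi => sens (Theory (fun s => voc T s \/ In s (syms Sym chi1)) (fun phi => sens T phi \/ phi = chi1)) phi \/
                                     sens (Theory (fun s => voc T s \/ In s (syms Sym chi2)) (fun phi => sens T phi \/ phi = chi2)) phi)).
  { apply Hab.
    - intros s. simpl. split; [intros V; split; left; auto|].
      intros [[V|V1] [V'|V2]]; auto. apply A; apply syms_occurs; auto.
    - split; [|split].
      + intros phi [Sp|E]; simpl; [apply (sentence_mono Sym ar (voc T)); auto|subst phi; auto].
      + exact B1.
      + apply (card_lt_app Sym K h hinj). exact Hcard.
    - split; [|split].
      + intros phi [Sp|E]; simpl; [apply (sentence_mono Sym ar (voc T)); auto|subst phi; auto].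
      + exact B2.
      + apply (card_lt_app Sym K h hinj). exact Hcard.
    - intros phi. simpl. split; [intros Sp; split; left; auto|].
      intros [[Sp|E1] [Sp'|E2]]; auto. subst phi.
      assert (Sc : sentence_of ar (voc T) chi1).
      { destruct sc1 as [W [Cl O]]. split; [exact W|split; [exact Cl|]].
        intros s Os. apply A; auto. rewrite <- E2. auto. }
      destruct (Hcomp chi1 Sc) as [S1|S1]; auto. exfalso.
      destruct (B1 [chi1; FNeg chi1]) as [M [m0 [I MI]]].
      { intros phi [<-|[<-|[]]]; [right; auto|left; auto]. }
      apply (MI (FNeg chi1) (or_intror (or_introl eq_refl)) (fun _ => m0)).
      apply MI. left. reflexivity. }
  destruct (C [chi1; chi2]) as [M [m0 [J MJ]]].
  { intros phi [<-|[<-|[]]]; simpl; auto. }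
  exists M, m0, (fun t => J (r t)). intros phi Hp rho. apply H3 in Hp. destruct Hp as [Hp|Hp].
  - assert (S : sat J rho chi1) by (apply MJ; left; auto).
    unfold chi1 in S. rewrite sat_rename in S.
    exact (proj1 (sat_conj Sym m0 _ rho l1) S phi Hp).
  - assert (S : sat J rho chi2) by (apply MJ; right; left; auto).
    unfold chi2 in S. rewrite sat_rename in S.
    exact (proj1 (sat_conj Sym m0 _ rho l2) S phi Hp).
Qed.

Lemma ec_transfer : T_ec ar K T -> T_ec ar K T'.
Proof.
  intros [Tc Hec]. split; [apply c_transfer; auto|].
  destruct Tc as [[Th [Hc Hcard]] Hcomp].
  intros S psi NDS HS [W [Cl O]] Cons. simpl in HS, O.
  destruct (pullback S Hcard NDS HS)
    as [Fr [r [rinv [NDF [LF [DF [AF [rT [rU [rr [rf [ra [rTT rUF]]]]]]]]]]]]].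
  set (Dom := fun t => tau2 t \/ In t S).
  set (chi := rename r psi).
  assert (Schi : sentence_of ar (fun s => voc T s \/ In s Fr) chi).
  { split; [|split].
    - apply wf_rename; auto.
    - intros v Hv. apply fv_rename in Hv. exact (Cl v Hv).
    - intros t Ot. apply occurs_rename in Ot. destruct Ot as [s [Os <-]].
      destruct (O s Os) as [A|A]; [left; apply rTT; auto|right; apply rUF; auto]. }
  assert (Cchi : consistent (fun phi => sens T phi \/ phi = chi)).
  { apply (pull_cons r rinv Dom (sens T') psi); auto. }
  destruct (Hec Fr chi NDF DF Schi Cchi) as [S' [LS' [NDS' [AS' [VS' [g [gF [gid gT]]]]]]]].
  set (g2 := fun s => if excluded_middle_informative (In s S) then f (nth (idx s S) S' s) else s).
  exists (map f S'). split; [|split; [|split; [|split]]].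
  - rewrite length_map. congruence.
  - apply NoDup_map_on; auto.
  - intros i d Hi.
    assert (HiS' : i < length S') by congruence.
    rewrite (nth_indep _ d (f d)) by (rewrite length_map; auto).
    rewrite map_nth. rewrite far by (apply VS'; apply nth_In; auto).
    rewrite AS' by congruence. apply AF. auto.
  - intros s Hs. apply in_map_iff in Hs. destruct Hs as [x [<- Hx]]. simpl. apply Htau2. eauto.
  - exists g2. split; [|split].
    + intros i d Hi. unfold g2.
      destruct (excluded_middle_informative (In (nth i S d) S)) as [_|N]; [|exfalso; apply N, nth_In; auto].
      rewrite idx_nth; auto.
      rewrite (nth_indep (map f S') d (f (nth i S d))) by (rewrite length_map; congruence).
      rewrite map_nth. reflexivity.
    + intros s Ns. unfold g2. destruct (excluded_middle_informative (In s S)); tauto.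
    + simpl. exists (rename g chi). split; auto.
      unfold chi. rewrite !rename_comp. apply rename_ext. intros t Ot.
      unfold g2. destruct (O t Ot) as [Ht|Ht].
      * destruct (excluded_middle_informative (In t S)) as [A|_]; [exfalso; exact (HS t A Ht)|].
        rewrite rT; auto. destruct (finv_spec t Ht) as [V E].
        rewrite gid; auto. intro I. exact (DF _ I V).
      * destruct (excluded_middle_informative (In t S)) as [_|N]; [|contradiction].
        rewrite rU; auto. rewrite gF; auto. rewrite LF. apply idx_lt. auto.
Qed.

End P5.

From Stdlib Require Import List Arith Lia Classical ClassicalEpsilon FunctionalExtensionality PropExtensionality ProofIrrelevance.
Import ListNotations.
Set Bullet Behavior "Strict Subproofs".

Section Core.
Variable Sym : Type.
Variable ar : Sym -> nat.
Variable K : Type.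
Variable T : theory Sym.
Variable A : Type.
Variable pA : A * A -> A.
Hypothesis pA_inj : forall p q, pA p = pA q -> p = q.
Variable nA : nat -> A.
Hypothesis nA_inj : forall m n, nA m = nA n -> m = n.
Variable tA : Sym -> A.
Hypothesis tA_inj : forall s t, voc T s -> voc T t -> tA s = tA t -> s = t.
Variable z : nat -> nat -> Sym.
Hypothesis z_ar : forall i a, ar (z i a) = a.
Hypothesis z_T : forall i a, ~ voc T (z i a).
Hypothesis z_inj : forall i a j b, z i a = z j b -> i = j /\ a = b.
Variable Fr : nat -> A -> Sym.
Hypothesis Fr_ar : forall a c, ar (Fr a c) = a.
Hypothesis Fr_T : forall a c, ~ voc T (Fr a c).
Hypothesis Fr_Z : forall a c i b, Fr a c <> z i b.
Hypothesis Fr_inj : forall a c b d, Fr a c = Fr b d -> a = b /\ c = d.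

Lemma cons_inj' {X : Type} (a b : X) l l' : a :: l = b :: l' -> a = b /\ l = l'.
Proof. intro E. injection E. auto. Qed.
Lemma pair_inj' {X Y : Type} (a b : X) (c d : Y) : (a, c) = (b, d) -> a = b /\ c = d.
Proof. intro E. injection E. auto. Qed.

Definition Zs s := exists i a, s = z i a.
Definition Frs s := exists a c, s = Fr a c.
Definition Dom s := voc T s \/ Zs s \/ Frs s.

Definition zinv s : nat * nat := choose_or (0, 0) (fun s p => s = z (fst p) (snd p)) s.
Definition Frinv s : nat * A := choose_or (0, nA 0) (fun s p => s = Fr (fst p) (snd p)) s.

Lemma zinv_spec s : Zs s -> s = z (fst (zinv s)) (snd (zinv s)).
Proof.
  intros [i [a E]]. apply (choose_or_spec (0,0) (fun s p => s = z (fst p) (snd p)) s).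
  exists (i, a). auto.
Qed.

Lemma zinv_z i a : zinv (z i a) = (i, a).
Proof.
  pose proof (zinv_spec (z i a) (ex_intro _ i (ex_intro _ a eq_refl))) as E.
  apply z_inj in E. destruct (zinv (z i a)). simpl in *. destruct E; subst; auto.
Qed.

Lemma Frinv_spec s : Frs s -> s = Fr (fst (Frinv s)) (snd (Frinv s)).
Proof.
  intros [a [c E]]. apply (choose_or_spec (0, nA 0) (fun s p => s = Fr (fst p) (snd p)) s).
  exists (a, c). auto.
Qed.

Definition symcode s : A :=
  if excluded_middle_informative (voc T s) then pA (nA 0, tA s)
  else if excluded_middle_informative (Zs s) then pA (nA 1, nA (pn (zinv s)))
  else if excluded_middle_informative (Frs s) then pA (nA 2, pA (nA (fst (Frinv s)), snd (Frinv s)))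
  else nA 0.

Lemma ZT s : Zs s -> ~ voc T s.
Proof. intros [i [a ->]]. apply z_T. Qed.
Lemma FrT s : Frs s -> ~ voc T s.
Proof. intros [a [c ->]]. apply Fr_T. Qed.
Lemma FrZ s : Frs s -> ~ Zs s.
Proof. intros [a [c ->]] [i [b E]]. exact (Fr_Z a c i b E). Qed.

Lemma sc_T s : voc T s -> symcode s = pA (nA 0, tA s).
Proof. intro H. unfold symcode. destruct (excluded_middle_informative (voc T s)); tauto. Qed.
Lemma sc_Z s : Zs s -> symcode s = pA (nA 1, nA (pn (zinv s))).
Proof.
  intro H. unfold symcode. destruct (excluded_middle_informative (voc T s)) as [A1|_]; [exfalso; exact (ZT s H A1)|].
  destruct (excluded_middle_informative (Zs s)); tauto.
Qed.
Lemma sc_F s : Frs s -> symcode s = pA (nA 2, pA (nA (fst (Frinv s)), snd (Frinv s))).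
Proof.
  intro H. unfold symcode. destruct (excluded_middle_informative (voc T s)) as [A1|_]; [exfalso; exact (FrT s H A1)|].
  destruct (excluded_middle_informative (Zs s)) as [A2|_]; [exfalso; exact (FrZ s H A2)|].
  destruct (excluded_middle_informative (Frs s)); tauto.
Qed.

Lemma symcode_inj s t : Dom s -> Dom t -> symcode s = symcode t -> s = t.
Proof.
  intros Ds Dt E.
  destruct Ds as [Ts|[Zs1|Fs]]; destruct Dt as [Tt|[Zt|Ft]];
  [rewrite (sc_T s Ts) in E|rewrite (sc_T s Ts) in E|rewrite (sc_T s Ts) in E
  |rewrite (sc_Z s Zs1) in E|rewrite (sc_Z s Zs1) in E|rewrite (sc_Z s Zs1) in E
  |rewrite (sc_F s Fs) in E|rewrite (sc_F s Fs) in E|rewrite (sc_F s Fs) in E];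
  [rewrite (sc_T t Tt) in E|rewrite (sc_Z t Zt) in E|rewrite (sc_F t Ft) in E
  |rewrite (sc_T t Tt) in E|rewrite (sc_Z t Zt) in E|rewrite (sc_F t Ft) in E
  |rewrite (sc_T t Tt) in E|rewrite (sc_Z t Zt) in E|rewrite (sc_F t Ft) in E];
  apply pA_inj in E; apply pair_inj' in E; destruct E as [E1 E2]; apply nA_inj in E1; try discriminate E1.
  - apply tA_inj; auto.
  - apply nA_inj in E2. apply pn_inj in E2. rewrite (zinv_spec s Zs1), (zinv_spec t Zt), E2. reflexivity.
  - apply pA_inj in E2. apply pair_inj' in E2. destruct E2 as [E3 E4]. apply nA_inj in E3.
    rewrite (Frinv_spec s Fs), (Frinv_spec t Ft), E3, E4. reflexivity.
Qed.

Fixpoint ser (phi : form Sym) : list A :=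
  match phi with
  | FAtom R xs => nA 0 :: symcode R :: nA (length xs) :: map nA xs
  | FEq x y => [nA 1; nA x; nA y]
  | FNeg p => nA 2 :: ser p
  | FAnd p q => nA 3 :: ser p ++ ser q
  | FEx x p => nA 4 :: nA x :: ser p
  | FQcf x y p => nA 5 :: nA x :: nA y :: ser p
  end.

Lemma map_nA_app xs ys r1 r2 : length xs = length ys -> map nA xs ++ r1 = map nA ys ++ r2 -> xs = ys /\ r1 = r2.
Proof.
  revert ys. induction xs as [|x xs IH]; intros [|y ys] L E; simpl in *; try discriminate; auto.
  apply cons_inj' in E; destruct E as [E1 E2]. apply nA_inj in E1. injection L as L.
  destruct (IH ys L E2). subst. auto.
Qed.

Definition coded (phi : form Sym) := forall s, occurs phi s -> Dom s.

Lemma ser_inj phi : forall psi r1 r2, coded phi -> coded psi -> ser phi ++ r1 = ser psi ++ r2 -> phi = psi /\ r1 = r2.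
Proof.
  induction phi as [R xs|x y|p IH|p IHp q IHq|x p IH|x y p IH]; intros psi r1 r2 Cphi Cpsi E;
  destruct psi as [R' xs'|x' y'|p'|p' q'|x' p'|x' y' p']; simpl in E;
  apply cons_inj' in E; destruct E as [E0 E]; apply nA_inj in E0; try discriminate E0.
  - apply cons_inj' in E; destruct E as [E1 E]. apply cons_inj' in E; destruct E as [E2 E3]. apply symcode_inj in E1; [|apply Cphi; simpl; auto|apply Cpsi; simpl; auto].
    apply nA_inj in E2. destruct (map_nA_app xs xs' r1 r2 E2 E3). subst. auto.
  - apply cons_inj' in E; destruct E as [E1 E]. apply cons_inj' in E; destruct E as [E2 E3]. apply nA_inj in E1. apply nA_inj in E2. subst. auto.
  - destruct (IH p' r1 r2 Cphi Cpsi E). subst. auto.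
  - rewrite <- !app_assoc in E.
    destruct (IHp p' (ser q ++ r1) (ser q' ++ r2)) as [E1 E2]; auto.
    + intros s Os. apply Cphi. simpl. auto.
    + intros s Os. apply Cpsi. simpl. auto.
    + destruct (IHq q' r1 r2) as [E3 E4]; auto.
      * intros s Os. apply Cphi. simpl. auto.
      * intros s Os. apply Cpsi. simpl. auto.
      * subst. auto.
  - apply cons_inj' in E; destruct E as [E1 E]. apply nA_inj in E1. destruct (IH p' r1 r2 Cphi Cpsi E). subst. auto.
  - apply cons_inj' in E; destruct E as [E1 E]. apply cons_inj' in E; destruct E as [E2 E]. apply nA_inj in E1. apply nA_inj in E2.
    destruct (IH p' r1 r2 Cphi Cpsi E). subst. auto.
Qed.

Fixpoint lcode (l : list A) : A :=
  match l with
  | [] => pA (nA 0, nA 0)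
  | a :: l => pA (nA 1, pA (a, lcode l))
  end.

Lemma lcode_inj l1 l2 : lcode l1 = lcode l2 -> l1 = l2.
Proof.
  revert l2. induction l1 as [|a l1 IH]; intros [|b l2] E; simpl in E; auto;
  apply pA_inj in E; apply pair_inj' in E; destruct E as [E1 E2]; apply nA_inj in E1; try discriminate E1.
  apply pA_inj in E2. apply pair_inj' in E2. destruct E2 as [E3 E4]. apply IH in E4. subst. auto.
Qed.

Definition fcode phi := lcode (ser phi).

Lemma fcode_inj phi psi : coded phi -> coded psi -> fcode phi = fcode psi -> phi = psi.
Proof.
  intros C1 C2 E. apply lcode_inj in E.
  assert (E' : ser phi ++ [] = ser psi ++ []) by (rewrite !app_nil_r; auto).
  exact (proj1 (ser_inj phi psi [] [] C1 C2 E')).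
Qed.

Definition frs chi i a := Fr a (pA (fcode chi, nA (pn (i, a)))).

Lemma frs_ar chi i a : ar (frs chi i a) = a.
Proof. apply Fr_ar. Qed.

Lemma frs_inj chi chi' i a i' a' : coded chi -> coded chi' -> frs chi i a = frs chi' i' a' ->
  chi = chi' /\ i = i' /\ a = a'.
Proof.
  intros C1 C2 E. apply Fr_inj in E. destruct E as [_ E]. apply pA_inj in E.
  apply pair_inj' in E. destruct E as [E1 E2]. apply fcode_inj in E1; auto. apply nA_inj in E2. apply pn_inj in E2.
  injection E2 as -> ->. auto.
Qed.

Lemma frs_Frs chi i a : Frs (frs chi i a).
Proof. exists a, (pA (fcode chi, nA (pn (i, a)))). reflexivity. Qed.

Fixpoint vs (n : nat) : Sym -> Prop :=
  match n with
  | 0 => voc T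
  | S n => fun s => vs n s \/ exists chi i a, (forall t, occurs chi t -> vs n t \/ Zs t) /\ s = frs chi i a
  end.

Definition over n chi := forall s, occurs chi s -> vs n s \/ Zs s.

Lemma vs_mono m n : m <= n -> forall s, vs m s -> vs n s.
Proof. induction 1; intros s Hs; simpl; auto. Qed.

Lemma vs_TF n s : vs n s -> voc T s \/ Frs s.
Proof.
  revert s. induction n as [|n IH]; intros s Hs; simpl in Hs; auto.
  destruct Hs as [Hs|[chi [i [a [_ ->]]]]]; auto. right. apply frs_Frs.
Qed.

Lemma vs_Dom n s : vs n s -> Dom s.
Proof. intro Hs. destruct (vs_TF n s Hs); unfold Dom; auto. Qed.

Lemma vs_notZ n s : vs n s -> ~ Zs s.
Proof. intros Hs Zs1. destruct (vs_TF n s Hs) as [H|H]; [exact (ZT s Zs1 H)|exact (FrZ s H Zs1)]. Qed.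

Lemma over_coded n chi : over n chi -> coded chi.
Proof. intros O s Os. destruct (O s Os) as [H|H]; [apply (vs_Dom n); auto|unfold Dom; auto]. Qed.

Definition new n chi := over n chi /\ forall m, m < n -> ~ over m chi.

Lemma frs_vs m chi i a : coded chi -> vs m (frs chi i a) -> exists k, k < m /\ over k chi.
Proof.
  intros C. induction m as [|m IH]; simpl; intros Hs.
  - exfalso. exact (Fr_T _ _ Hs).
  - destruct Hs as [Hs|[chi' [i' [a' [O E]]]]].
    + destruct (IH Hs) as [k [Hk Ok]]. exists k. split; auto.
    + apply frs_inj in E; auto.
      * destruct E as [-> _]. exists m. split; auto.
      * intros s Os. destruct (O s Os) as [H|H]; [apply (vs_Dom m); auto|unfold Dom; auto].
Qed.

Lemma frs_new n chi i a : new n chi -> ~ vs n (frs chi i a).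
Proof.
  intros [O N] Hs. destruct (frs_vs n chi i a (over_coded n chi O) Hs) as [k [Hk Ok]].
  exact (N k Hk Ok).
Qed.

Lemma frs_in n chi i a : over n chi -> vs (S n) (frs chi i a).
Proof. intro O. simpl. right. exists chi, i, a. auto. Qed.

Definition sig_ chi s := if excluded_middle_informative (Zs s) then frs chi (fst (zinv s)) (snd (zinv s)) else s.
Definition inst chi := rename (sig_ chi) chi.

Lemma sig_z chi i a : sig_ chi (z i a) = frs chi i a.
Proof.
  unfold sig_. destruct (excluded_middle_informative (Zs (z i a))) as [_|N].
  - rewrite zinv_z. reflexivity.
  - exfalso. apply N. exists i, a. reflexivity.
Qed.

Lemma sig_nZ chi s : ~ Zs s -> sig_ chi s = s.
Proof. intro N. unfold sig_. destruct (excluded_middle_informative (Zs s)); tauto. Qed.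

Lemma inst_occ n chi u : over n chi -> occurs (inst chi) u -> vs n u \/ exists i a, u = frs chi i a.
Proof.
  intros O Ou. apply occurs_rename in Ou. destruct Ou as [s [Os <-]].
  destruct (O s Os) as [H|[i [a ->]]].
  - left. rewrite sig_nZ; auto. apply (vs_notZ n). auto.
  - right. rewrite sig_z. eauto.
Qed.

Definition closedwf (chi : form Sym) := wf ar chi /\ forall v, ~ fv chi v.

Lemma inst_sent n chi : over n chi -> closedwf chi -> sentence_of ar (vs (S n)) (inst chi).
Proof.
  intros O [W Cl]. split; [|split].
  - apply wf_rename; auto. intros s Os. destruct (O s Os) as [H|[i [a ->]]].
    + rewrite sig_nZ; auto. apply (vs_notZ n). auto.
    + rewrite sig_z, frs_ar, z_ar. reflexivity.
  - intros v Hv. apply fv_rename in Hv. exact (Cl v Hv).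
  - intros u Ou. destruct (inst_occ n chi u O Ou) as [H|[i [a ->]]].
    + simpl. auto.
    + apply frs_in. auto.
Qed.


Lemma ex_min (P : nat -> Prop) : (exists n, P n) -> exists n, P n /\ forall m, m < n -> ~ P m.
Proof.
  intros [n Pn]. apply NNPP. intro N.
  assert (H : forall k, forall m, m <= k -> ~ P m).
  { induction k as [|k IH]; intros m Hm Pm.
    - apply N. exists m. split; auto. intros m' Hm'. lia.
    - apply N. exists m. split; auto. intros m' Hm' Pm'. apply (IH m'); auto. lia. }
  exact (H n n (le_n n) Pn).
Qed.

Hypothesis HT : T_lt ar K T.
Variable eAK : A -> K.
Hypothesis eAK_inj : forall a b, eAK a = eAK b -> a = b.
Hypothesis noKA : ~ exists g : K -> A, injective g.

Definition sentn n (Sg : form Sym -> Prop) := forall phi, Sg phi -> sentence_of ar (vs n) phi.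
Definition good n Sg := sentn n Sg /\ consistent Sg /\
  (forall phi, sentence_of ar (vs n) phi -> Sg phi \/ Sg (FNeg phi)).
Definition instset (As : form Sym -> Prop) phi := exists chi, As chi /\ phi = inst chi.
Definition spec n (Sg Sg' : form Sym -> Prop) := exists As,
  (forall chi, As chi -> new n chi /\ closedwf chi) /\
  (forall phi, Sg phi \/ instset As phi -> Sg' phi) /\
  (forall chi, new n chi -> closedwf chi -> ~ As chi ->
     ~ consistent (fun phi => (Sg phi \/ instset As phi) \/ phi = inst chi)) /\
  good (S n) Sg'.

Lemma spec_ex n Sg : good n Sg -> exists Sg', spec n Sg Sg'.
Proof.
  intros [Sn [C _]].
  set (P := fun As : form Sym -> Prop => (forall chi, As chi -> new n chi /\ closedwf chi) /\
                      consistent (fun phi => Sg phi \/ instset As phi)).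
  destruct (ZW.zorn_sets _ P) as [As [[HAs CAs] Amax]].
  - intros F FP Ftot. split.
    + intros chi [X [FX Xc]]. exact (proj1 (FP X FX) chi Xc).
    + set (F' := fun Y : form Sym -> Prop => exists As, F As /\ Y = instset As).
      apply (cons_mono Sym (fun phi => Sg phi \/ exists Y, F' Y /\ Y phi)).
      * apply cons_chain; auto.
        -- intros Y [As0 [FA ->]]. exact (proj2 (FP As0 FA)).
        -- intros Y1 Y2 [A1 [F1 ->]] [A2 [F2 ->]].
           destruct (Ftot A1 A2 F1 F2) as [H12|H21]; [left|right];
           intros t [chi [Ac Et]]; exists chi; auto.
      * intros phi [H|[chi [[X [FX Xc]] E]]]; [left; auto|right].
        exists (instset X). split; [exists X; auto|]. exists chi. auto.
  - destruct (lindenbaum Sym ar (vs (S n)) (fun phi => Sg phi \/ instset As phi)) as [Sg' [H1 [H2 [H3 H4]]]].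
    + intros phi [H|[chi [Ac ->]]].
      * apply (sentence_mono Sym ar (vs n)); [intros s Hs; simpl; auto|auto].
      * destruct (HAs chi Ac) as [[O _] cw]. apply inst_sent; auto.
    + exact CAs.
    + exists Sg', As. split; [auto|split; [auto|split]].
      * intros chi Nc cw NA Cc. apply NA. apply (Amax (fun c => As c \/ c = chi)).
        -- split.
           ++ intros c [Hc| Ec]; [auto|subst c; auto].
           ++ apply (cons_mono Sym _ _ Cc). intros phi [H|[c [[Hc| Ec] Ep]]]; try subst phi; auto.
              ** left; right; exists c; auto.
              ** subst c. auto.
        -- auto.
        -- auto.
      * split; [exact H3|split; [exact H2|exact H4]].
Qed.

Definition step n Sg := choose_or Sg (fun Sg Sg' => spec n Sg Sg') Sg.
Definition Sig0 := choose_or (sens T) (fun Sg Sg' => (forall phi, Sg phi -> Sg' phi) /\ good 0 Sg') (sens T).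
Fixpoint Sq n := match n with 0 => Sig0 | S n => step n (Sq n) end.

Lemma Sig0_spec : (forall phi, sens T phi -> Sig0 phi) /\ good 0 Sig0.
Proof.
  apply (choose_or_spec (sens T) (fun Sg Sg' => (forall phi, Sg phi -> Sg' phi) /\ good 0 Sg') (sens T)).
  destruct HT as [Th [Hc _]].
  destruct (lindenbaum Sym ar (voc T) (sens T) Th Hc) as [Sg' [H1 [H2 [H3 H4]]]].
  exists Sg'. split; auto. split; [exact H3|split; [exact H2|exact H4]].
Qed.

Lemma Sq_good n : good n (Sq n) /\ spec n (Sq n) (Sq (S n)).
Proof.
  assert (G : forall n, good n (Sq n)).
  { induction n0 as [|n0 IH].
    - exact (proj2 Sig0_spec).
    - simpl. destruct (spec_ex n0 (Sq n0) IH) as [Sg' Hs].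
      pose proof (choose_or_spec (Sq n0) (fun Sg Sg' => spec n0 Sg Sg') (Sq n0) (ex_intro _ Sg' Hs)) as Hs'.
      destruct Hs' as [As [_ [_ [_ Gd]]]]. exact Gd. }
  split; [apply G|].
  simpl. destruct (spec_ex n (Sq n) (G n)) as [Sg' Hs].
  exact (choose_or_spec (Sq n) (fun Sg Sg' => spec n Sg Sg') (Sq n) (ex_intro _ Sg' Hs)).
Qed.

Lemma Sq_incl n phi : Sq n phi -> Sq (S n) phi.
Proof.
  intro H. destruct (proj2 (Sq_good n)) as [As [_ [Hi _]]]. apply Hi. auto.
Qed.

Lemma Sq_mono m n : m <= n -> forall phi, Sq m phi -> Sq n phi.
Proof. induction 1; intros phi Hp; auto. apply Sq_incl. auto. Qed.

Lemma list_vs (Q : Sym -> Prop) (l : list Sym) : (forall s, In s l -> (exists n, vs n s) \/ Q s) ->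
  exists N, forall s, In s l -> vs N s \/ Q s.
Proof.
  induction l as [|a l IH]; intros Hl.
  - exists 0. intros _ [].
  - destruct IH as [N HN]; [intros; apply Hl; right; auto|].
    destruct (Hl a (or_introl eq_refl)) as [[n Hn]|Qa].
    + exists (max N n). intros s [<-|Hs].
      * left. apply (vs_mono n); auto. lia.
      * destruct (HN s Hs) as [H|H]; auto. left. apply (vs_mono N); auto. lia.
    + exists N. intros s [<-|Hs]; auto.
Qed.

Lemma list_Sq (l : list (form Sym)) : (forall phi, In phi l -> exists n, Sq n phi) ->
  exists N, forall phi, In phi l -> Sq N phi.
Proof.
  induction l as [|a l IH]; intros Hl.
  - exists 0. intros _ [].
  - destruct IH as [N HN]; [intros; apply Hl; right; auto|].
    destruct (Hl a (or_introl eq_refl)) as [n Hn].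
    exists (max N n). intros phi [<-|Hp].
    + apply (Sq_mono n); auto. lia.
    + apply (Sq_mono N); auto. lia.
Qed.

Theorem core : exists T' : theory Sym, T_ec ar K T' /\ (forall s, voc T s -> voc T' s) /\
   (forall phi, sens T phi -> sens T' phi).
Proof.
  set (T' := Theory (fun s => exists n, vs n s) (fun phi => exists n, Sq n phi)).
  assert (Tlt : T_lt ar K T').
  { split; [|split].
    - intros phi [n Hn]. simpl. apply (sentence_mono Sym ar (vs n)); [intros s Hs; eauto|].
      exact (proj1 (proj1 (Sq_good n)) phi Hn).
    - intros l Hl. destruct (list_Sq l Hl) as [N HN].
      exact (proj1 (proj2 (proj1 (Sq_good N))) l HN).
    - apply card_lt_of.
      + exists (fun s => eAK (symcode s)). intros x y [n Hx] [m Hy] E.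
        apply eAK_inj in E. apply symcode_inj in E; auto; [apply (vs_Dom n)|apply (vs_Dom m)]; auto.
      + intros [g [gV ginj]]. apply noKA. exists (fun k => symcode (g k)).
        intros a b E. apply ginj. destruct (gV a) as [n Hn]. destruct (gV b) as [m Hm].
        apply symcode_inj; auto; [apply (vs_Dom n)|apply (vs_Dom m)]; auto. }
  assert (Tc : T_c ar K T').
  { split; auto. intros phi [W [Cl O]]. simpl in O.
    destruct (list_vs (fun _ => False) (syms Sym phi)) as [N HN].
    { intros s Hs. left. apply O. apply syms_occurs. auto. }
    assert (SN : sentence_of ar (vs N) phi).
    { split; [auto|split; [auto|]]. intros s Os. destruct (HN s (proj1 (syms_occurs Sym phi s) Os)); tauto. }
    destruct (proj2 (proj2 (proj1 (Sq_good N))) phi SN) as [H|H]; [left|right]; exists N; auto. }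
  exists T'. split; [|split].
  2: { intros s Hs. exists 0. exact Hs. }
  2: { intros phi Hp. exists 0. exact (proj1 Sig0_spec phi Hp). }
  split; [exact Tc|].
  intros S psi NDS HS [W [Cl O]] Cons. simpl in HS, O.
  set (rho := fun s => if excluded_middle_informative (In s S) then z (idx s S) (ar s) else s).
  set (chi := rename rho psi).
  assert (rhoS : forall s, In s S -> rho s = z (idx s S) (ar s)).
  { intros s Hs. unfold rho. destruct (excluded_middle_informative (In s S)); tauto. }
  assert (rhoN : forall s, ~ In s S -> rho s = s).
  { intros s Hs. unfold rho. destruct (excluded_middle_informative (In s S)); tauto. }
  assert (OV : forall s, occurs psi s -> ~ In s S -> exists n, vs n s).
  { intros s Os Ns. destruct (O s Os); tauto. }
  destruct (list_vs (fun s => In s S) (syms Sym psi)) as [N HN].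
  { intros s Hs. apply O. apply syms_occurs. auto. }
  assert (overN : over N chi).
  { intros t Ot. apply occurs_rename in Ot. destruct Ot as [s [Os <-]].
    destruct (HN s (proj1 (syms_occurs Sym psi s) Os)) as [H|H].
    - destruct (classic (In s S)) as [I|I].
      + right. rewrite rhoS; auto. eexists; eexists; reflexivity.
      + left. rewrite rhoN; auto.
    - right. rewrite rhoS; auto. eexists; eexists; reflexivity. }
  destruct (ex_min (fun n => over n chi) (ex_intro _ N overN)) as [n [On Nmin]].
  assert (Nchi : new n chi) by (split; auto).
  assert (Cchi : coded chi) by (apply (over_coded n); auto).
  assert (cw : closedwf chi).
  { split.
    - apply wf_rename; auto. intros s Os. destruct (classic (In s S)) as [I|I].
      + rewrite rhoS; auto.
      + rewrite rhoN; auto.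
    - intros v Hv. apply fv_rename in Hv. exact (Cl v Hv). }
  assert (psivs : forall s, occurs psi s -> ~ In s S -> vs n s).
  { intros s Os Ns. assert (Oc : occurs chi s).
    { apply occurs_rename. exists s. split; auto. }
    destruct (On s Oc) as [H|H]; auto.
    exfalso. destruct (OV s Os Ns) as [m Hm]. exact (vs_notZ m s Hm H). }
  set (g := fun s => if excluded_middle_informative (In s S) then frs chi (idx s S) (ar s) else s).
  assert (gS : forall s, In s S -> g s = frs chi (idx s S) (ar s)).
  { intros s Hs. unfold g. destruct (excluded_middle_informative (In s S)); tauto. }
  assert (gN : forall s, ~ In s S -> g s = s).
  { intros s Hs. unfold g. destruct (excluded_middle_informative (In s S)); tauto. }
  assert (ginj : forall s s', In s S -> In s' S -> g s = g s' -> s = s').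
  { intros s s' Hs Hs' E. rewrite gS, gS in E; auto. apply frs_inj in E; auto.
    destruct E as [_ [E _]]. rewrite <- (nth_idx s S s Hs), <- (nth_idx s' S s Hs'), E. reflexivity. }
  assert (Eg : inst chi = rename g psi).
  { unfold inst, chi. rewrite rename_comp. apply rename_ext. intros s Os.
    destruct (classic (In s S)) as [I|I].
    - rewrite rhoS, gS; auto. apply sig_z.
    - rewrite rhoN, gN; auto. apply sig_nZ. apply (vs_notZ n). auto. }
  destruct (proj2 (Sq_good n)) as [As [HAs [Hincl [Hmax _]]]].
  assert (Achi : As chi).
  { apply NNPP. intro NA. apply (Hmax chi Nchi cw NA).
    intros l' Hl'.
    destruct (list_split Sym (fun phi => Sq n phi \/ instset As phi) l') as [la [lb [Ha [Hb Hab]]]].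
    destruct (Cons (psi :: la)) as [M [m0 [I MI]]].
    { intros phi [<-|Hp]; [right; auto|left]. exists (Datatypes.S n). apply Hincl. auto. }
    set (ginv := choose_or (z 0 0) (fun u s => In s S /\ u = g s)).
    set (I' := fun u => if excluded_middle_informative (exists s, In s S /\ u = g s) then I (ginv u) else I u).
    assert (I'N : forall u, ~ (exists s, In s S /\ u = g s) -> I' u = I u).
    { intros u Nu. unfold I'. destruct (excluded_middle_informative (exists s, In s S /\ u = g s)); tauto. }
    assert (I'g : forall s, In s S -> I' (g s) = I s).
    { intros s Hs. unfold I'. destruct (excluded_middle_informative (exists s', In s' S /\ g s = g s')) as [Ex|Ex].
      - destruct (choose_or_spec (z 0 0) (fun u s => In s S /\ u = g s) (g s) Ex) as [H1 H2].
        fold ginv in H1, H2. apply ginj in H2; auto. rewrite <- H2. reflexivity.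
      - exfalso. apply Ex. eauto. }
    assert (notfrs : forall u, vs n u -> ~ (exists s, In s S /\ u = g s)).
    { intros u Hu [s [Hs E]]. rewrite gS in E; auto. subst u. exact (frs_new n chi _ _ Nchi Hu). }
    exists M, m0, I'. intros phi Hp rho0. apply Hab in Hp. destruct Hp as [Hp|Hp].
    - rewrite (sat_ext_I Sym I' I phi); [apply MI; right; auto|].
      intros u Ou. apply I'N. destruct (Ha phi Hp) as [Hq|[chi' [Ac' ->]]].
      + apply notfrs. exact (proj2 (proj2 (proj1 (proj1 (Sq_good n)) phi Hq)) u Ou).
      + destruct (HAs chi' Ac') as [[O' _] _].
        destruct (inst_occ n chi' u O' Ou) as [Hu|[i' [a' ->]]]; [apply notfrs; auto|].
        intros [s [Hs E]]. rewrite gS in E; auto. apply frs_inj in E; [|apply (over_coded n); auto|auto].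
        destruct E as [-> _]. exact (NA Ac').
    - destruct (Hl' phi (proj2 (Hab phi) (or_intror Hp))) as [B|B].
      + exfalso. exact (Hb phi Hp B).
      + subst phi. rewrite Eg. rewrite sat_rename.
        rewrite (sat_ext_I Sym _ I psi); [apply MI; left; auto|].
        intros s Os. destruct (classic (In s S)) as [Is|Is].
        * apply I'g. auto.
        * rewrite (gN s Is). apply I'N. apply notfrs. apply psivs; auto. }
  assert (Sinst : sens T' (rename g psi)).
  { rewrite <- Eg. exists (Datatypes.S n). apply Hincl. right. exists chi. auto. }
  exists (map g S). split; [|split; [|split; [|split]]].
  - apply length_map.
  - apply NoDup_map_on; auto.
  - intros i d Hi.
    rewrite (nth_indep _ d (g d)) by (rewrite length_map; auto).
    rewrite map_nth. rewrite gS by (apply nth_In; auto). apply frs_ar.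
  - intros s Hs. apply in_map_iff in Hs. destruct Hs as [x [<- Hx]]. simpl.
    exists (Datatypes.S n). rewrite gS; auto. apply frs_in. auto.
  - exists g. split; [|split; [|exact Sinst]].
    + intros i d Hi.
      rewrite (nth_indep (map g S) d (g d)) by (rewrite length_map; auto).
      rewrite map_nth. reflexivity.
    + exact gN.
Qed.

End Core.

From Stdlib Require Import List Arith Lia Classical ClassicalEpsilon FunctionalExtensionality PropExtensionality ProofIrrelevance.
Import ListNotations.
Set Bullet Behavior "Strict Subproofs".

Section P4.
Variable Sym : Type.
Variable ar : Sym -> nat.
Variable K : Type.
Variable h : nat -> K.
Hypothesis hinj : forall m n, h m = h n -> m = n.
Hypothesis Hbig : forall n, exists h : K -> {s : Sym | ar s = n}, injective h.
Hypothesis Kunc : ~ exists h : K -> nat, injective h.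

Lemma rows (pK : K * K -> K) (pK_inj : forall p q, pK p = pK q -> p = q) (E : Sym -> Prop) a :
  ~ (exists g : K -> Sym, (forall k, E (g k)) /\ injective g) ->
  exists r : K -> Sym, injective r /\ forall k, ar (r k) = a /\ ~ E (r k).
Proof.
  intros N. destruct (Hbig a) as [H Hinj].
  assert (Hinj' : forall x y, proj1_sig (H x) = proj1_sig (H y) -> x = y).
  { intros x y Exy. apply Hinj. destruct (H x), (H y). simpl in Exy. subst. f_equal. apply proof_irrelevance. }
  destruct (classic (exists k0, forall k', ~ E (proj1_sig (H (pK (k0, k')))))) as [[k0 Hk0]|C].
  - exists (fun k' => proj1_sig (H (pK (k0, k')))). split.
    + intros x y Exy. apply Hinj' in Exy. apply pK_inj in Exy. injection Exy. auto.
    + intro k. split; [exact (proj2_sig (H _))|apply Hk0].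
  - exfalso. apply N.
    set (c := choose_or (h 0) (fun k0 k' => E (proj1_sig (H (pK (k0, k')))))).
    assert (cE : forall k, E (proj1_sig (H (pK (k, c k))))).
    { intro k. apply (choose_or_spec (h 0) (fun k0 k' => E (proj1_sig (H (pK (k0, k')))))).
      apply NNPP. intro N'. apply C. exists k. intros k' Ek'. apply N'. eauto. }
    exists (fun k => proj1_sig (H (pK (k, c k)))). split; auto.
    intros x y Exy. apply Hinj' in Exy. apply pK_inj in Exy. injection Exy. auto.
Qed.

Theorem part4 (T : theory Sym) : T_lt ar K T ->
  exists T' : theory Sym, T_ec ar K T' /\ (forall s, voc T s -> voc T' s) /\
    (forall phi, sens T phi -> sens T' phi).
Proof.
  intros HT. pose proof HT as [_ [_ Hcard]].
  destruct (card_lt_to Sym K h _ Hcard) as [[fL fLinj] NL].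
  set (A := ({s : Sym | voc T s} + nat)%type).
  set (nA := fun n : nat => (inr n : A)).
  assert (nA_inj : forall m n, nA m = nA n -> m = n) by (intros m n E; injection E; auto).
  destruct (hessenberg A nA nA_inj) as [pA pA_inj].
  destruct (hessenberg K h hinj) as [pK pK_inj].
  set (tA := fun s => match excluded_middle_informative (voc T s) with
                      | left Hs => (inl (exist _ s Hs) : A) | right _ => nA 0 end).
  assert (tA_inj : forall s t, voc T s -> voc T t -> tA s = tA t -> s = t).
  { intros s t Hs Ht E. unfold tA in E.
    destruct (excluded_middle_informative (voc T s)); [|contradiction].
    destruct (excluded_middle_informative (voc T t)); [|contradiction].
    injection E. auto. }
  set (eAK := fun a : A => match a with
                           | inl l => pK (fL (proj1_sig l), h 0)
                           | inr n => pK (h n, h 1) end).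
  assert (eAK_inj : forall a b, eAK a = eAK b -> a = b).
  { intros [[x Hx]|m] [[y Hy]|n] E; simpl in E; apply pK_inj in E; apply pair_inj' in E; destruct E as [E1 E2];
      try (apply hinj in E2; discriminate E2).
    - apply fLinj in E1; auto. subst. f_equal. f_equal. apply proof_irrelevance.
    - apply hinj in E1. subst. auto. }
  assert (noKA : ~ exists g : K -> A, injective g).
  { intros [g ginj].
    destruct (classic (exists s, voc T s)) as [[s0 Hs0]|NoL].
    - set (l0 := exist (fun s => voc T s) s0 Hs0).
      destruct (comparability 0 l0 (fun _ : nat => True) (fun _ : {s | voc T s} => True)) as [[e [_ einj]]|[c [_ cinj]]].
      + destruct (hessenberg {s | voc T s} e (fun m n E => einj m n I I E)) as [pL pL_inj].
        apply (proj2 Hcard). exists (fun k => match g k with inl l => pL (l, e 0) | inr n => pL (e n, e 1) end).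
        intros a b E. apply ginj.
        destruct (g a) as [la|na]; destruct (g b) as [lb|nb]; apply pL_inj in E; apply pair_inj' in E; destruct E as [E1 E2].
        * subst. auto.
        * apply einj in E2; auto. discriminate E2.
        * apply einj in E2; auto. discriminate E2.
        * apply einj in E1; auto.
      + apply Kunc. exists (fun k => match g k with inl l => 2 * c l | inr n => S (2 * n) end).
        intros a b E. apply ginj.
        destruct (g a) as [la|na]; destruct (g b) as [lb|nb]; try lia.
        * f_equal. apply cinj; auto. lia.
        * f_equal. lia.
    - apply Kunc. exists (fun k => match g k with inl _ => 0 | inr n => n end).
      intros a b E. apply ginj.
      destruct (g a) as [[la Hla]|na] eqn:Ea; [exfalso; apply NoL; eauto|].
      destruct (g b) as [[lb Hlb]|nb] eqn:Eb; [exfalso; apply NoL; eauto|].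
      subst. auto. }
  assert (zrows : forall a, exists r : K -> Sym, injective r /\ forall k, ar (r k) = a /\ ~ voc T (r k)).
  { intro a. apply (rows pK pK_inj). exact NL. }
  destruct (Hbig 0) as [H0 _]. set (z0 := proj1_sig (H0 (h 0))).
  set (zr := choose_or (fun _ : K => z0) (fun a (r : K -> Sym) => injective r /\ forall k, ar (r k) = a /\ ~ voc T (r k))).
  assert (zrP : forall a, injective (zr a) /\ forall k, ar (zr a k) = a /\ ~ voc T (zr a k)).
  { intro a. exact (choose_or_spec (fun _ : K => z0) (fun a (r : K -> Sym) => injective r /\ forall k, ar (r k) = a /\ ~ voc T (r k)) a (zrows a)). }
  set (z := fun i a => zr a (h i)).
  assert (z_ar : forall i a, ar (z i a) = a) by (intros; apply zrP).
  assert (z_T : forall i a, ~ voc T (z i a)) by (intros; apply zrP).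
  assert (z_inj : forall i a j b, z i a = z j b -> i = j /\ a = b).
  { intros i a j b E. assert (ab : a = b) by (rewrite <- (z_ar i a), <- (z_ar j b), E; reflexivity).
    subst b. split; auto. apply hinj. apply (proj1 (zrP a)). exact E. }
  set (Zs := fun s => exists i a, s = z i a).
  set (zinv := choose_or (0, 0) (fun s (p : nat * nat) => s = z (fst p) (snd p))).
  assert (zinvP : forall s, Zs s -> s = z (fst (zinv s)) (snd (zinv s))).
  { intros s [i [a E]]. apply (choose_or_spec (0, 0) (fun s (p : nat * nat) => s = z (fst p) (snd p)) s).
    exists (i, a). auto. }
  assert (NE : ~ exists g : K -> Sym, (forall k, voc T (g k) \/ Zs (g k)) /\ injective g).
  { intros [g [gE ginj]]. apply noKA.
    exists (fun k => if excluded_middle_informative (voc T (g k)) then tA (g k) else nA (pn (zinv (g k)))).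
    intros a b E. apply ginj.
    destruct (excluded_middle_informative (voc T (g a))) as [Ta|Ta];
    destruct (excluded_middle_informative (voc T (g b))) as [Tb|Tb].
    - apply tA_inj; auto.
    - unfold tA in E. destruct (excluded_middle_informative (voc T (g a))); [discriminate E|contradiction].
    - unfold tA in E. destruct (excluded_middle_informative (voc T (g b))); [discriminate E|contradiction].
    - apply nA_inj in E. apply pn_inj in E.
      destruct (gE a) as [A1|A1]; [contradiction|]. destruct (gE b) as [B1|B1]; [contradiction|].
      rewrite (zinvP _ A1), (zinvP _ B1), E. reflexivity. }
  assert (frows : forall a, exists r : K -> Sym, injective r /\ forall k, ar (r k) = a /\ ~ (voc T (r k) \/ Zs (r k))).
  { intro a. exact (rows pK pK_inj (fun s => voc T s \/ Zs s) a NE). }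
  set (fr := choose_or (fun _ : K => z0) (fun a (r : K -> Sym) => injective r /\ forall k, ar (r k) = a /\ ~ (voc T (r k) \/ Zs (r k)))).
  assert (frP : forall a, injective (fr a) /\ forall k, ar (fr a k) = a /\ ~ (voc T (fr a k) \/ Zs (fr a k))).
  { intro a. exact (choose_or_spec (fun _ : K => z0) (fun a (r : K -> Sym) => injective r /\ forall k, ar (r k) = a /\ ~ (voc T (r k) \/ Zs (r k))) a (frows a)). }
  set (Fr := fun a c => fr a (eAK c)).
  assert (Fr_ar : forall a c, ar (Fr a c) = a) by (intros; apply frP).
  assert (Fr_T : forall a c, ~ voc T (Fr a c)) by (intros a c H; apply (proj2 (proj2 (frP a) (eAK c))); left; exact H).
  assert (Fr_Z : forall a c i b, Fr a c <> z i b).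
  { intros a c i b E. apply (proj2 (proj2 (frP a) (eAK c))). right. exists i, b. exact E. }
  assert (Fr_inj : forall a c b d, Fr a c = Fr b d -> a = b /\ c = d).
  { intros a c b d E. assert (ab : a = b) by (rewrite <- (Fr_ar a c), <- (Fr_ar b d), E; reflexivity).
    subst b. split; auto. apply eAK_inj. apply (proj1 (frP a)). exact E. }
  exact (core Sym ar K T A pA pA_inj nA nA_inj tA tA_inj z z_ar z_T z_inj Fr Fr_ar Fr_T Fr_Z Fr_inj HT eAK eAK_inj noKA).
Qed.
End P4.

From Stdlib Require Import List.

Theorem lemma2p3 (Sym : Type) (ar : Sym -> nat) (K : Type)
  (Kinf : exists h : nat -> K, injective h)
  (Hbig : forall n, exists h : K -> {s : Sym | ar s = n}, injective h) :
  (forall T : theory Sym,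
      (T_c ar K T -> T_lt ar K T) /\ (T_ab ar K T -> T_c ar K T) /\
      (T_ec ar K T -> T_ab ar K T)) /\
  (forall T : theory Sym, T_lt ar K T ->
     exists T' : theory Sym, T_c ar K T' /\
       (forall s, voc T' s <-> voc T s) /\
       (forall phi, sens T phi -> sens T' phi)) /\
  (forall (I : Type) (Ti : I -> theory Sym) (T : theory Sym),
     (forall i j, i <> j -> forall s, voc (Ti i) s /\ voc (Ti j) s <-> voc T s) ->
     (forall i, T_lt ar K (Ti i)) ->
     T_ab ar K T ->
     (forall i phi, sens T phi -> sens (Ti i) phi) ->
     consistent (fun phi => exists i, sens (Ti i) phi)) /\
  (~ (exists h : K -> nat, injective h) ->
   forall T : theory Sym, T_lt ar K T ->
     exists T' : theory Sym, T_ec ar K T' /\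
       (forall s, voc T s -> voc T' s) /\
       (forall phi, sens T phi -> sens T' phi)) /\
  (forall (l : cls) (f : Sym -> Sym) (tau2 : Sym -> Prop) (T : theory Sym),
     (forall s t, voc T s -> voc T t -> f s = f t -> s = t) ->
     (forall s, voc T s -> ar (f s) = ar s) ->
     (forall t, tau2 t <-> exists s, voc T s /\ f s = t) ->
     T_cls ar K l T ->
     T_cls ar K l (rename_theory f tau2 T)).
Proof.
  pose proof Kinf as [h hinj].
  split; [intro T; apply part1|].
  split; [intros T HT; apply part2; exact HT|].
  split; [intros I Ti T H1 H2 H3 H4; exact (part3 Sym ar K Kinf I Ti T H1 H2 H3 H4)|].
  split; [intros Kunc T HT; exact (part4 Sym ar K h hinj Hbig Kunc T HT)|].
  intros l f tau2 T finj far Htau2 HT. destruct l; simpl in *.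
  - exact (c_transfer Sym ar K h hinj T f tau2 finj far Htau2 HT).
  - exact (ab_transfer Sym ar K h hinj Hbig T f tau2 finj far Htau2 HT).
  - exact (ec_transfer Sym ar K h hinj Hbig T f tau2 finj far Htau2 HT).
Qed.
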